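(* Let $h$ be an admissible perturbation. Then $\psi^h$ is strictly convex on $\Pi_h$, its unique minimizer $\pi^h$ lies in $\mathrm{int}(\Pi_h)$ and satisfies $F^h(A\pi^h)=\pi^h$. Moreover, for every $\pi\in\mathrm{int}(\Pi_h)$ one has $F^h(A\pi)\in\mathrm{int}(\Pi_h)$ and $$\Upsilon(\pi):=\big(\tilde\nabla h(F^h(A\pi))-\tilde\nabla h(\pi)\big)'\big(F^h(A\pi)-\pi\big)\ge0,$$ with equality if and only if $\pi=\pi^h$.
   Context: Network: $\mathcal G=(\mathcal V,\mathcal E)$ is a finite directed graph with $\mathcal V=\{0,1,\dots,n\}$, containing no directed cycle, in which node $0$ is the unique node with no incoming link, node $n$ is the unique node with no outgoing link, there is a directed path from every node to $n$, and every link $(u,v)\in\mathcal E$ satisfies $u<v$. Each link $e$ has a flow-density function $\mu_e:[0,\infty)\to[0,\infty)$ that is continuously differentiable, strictly increasing, strictly concave, with $\mu_e(0)=0$ and $\mu_e'(0)<\infty$; its capacity is $C_e:=\lim_{\rho\to\infty}\mu_e(\rho)\in(0,+\infty]$; $\mathcal F:=\prod_{e\in\mathcal E}[0,C_e)$. The delay is $T_e(f_e)=\mu_e^{-1}(f_e)/f_e$ for $0<f_e<C_e$, $T_e(0)=1/\mu_e'(0)$, $T_e(f_e)=+\infty$ for $f_e\ge C_e$; $T(f):=(T_e(f_e))_e$. $\mathcal P$ is the set of directed paths from $0$ to $n$, $A\in\{0,1\}^{\mathcal E\times\mathcal P}$ the link-path incidence matrix ($A_{ep}=1$ iff $e\in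 p$), $\mathcal S(\mathcal P)=\{\pi\in\mathbb R_+^{\mathcal P}:\sum_p\pi_p=1\}$, $\Pi:=\{\pi\in\mathcal S(\mathcal P):(A\pi)_e<C_e\ \forall e\}$. The min-cut capacity $C^*:=\min\{\sum_{(u,v)\in\mathcal E:u\in\mathcal U,v\notin\mathcal U}C_{(u,v)}:\mathcal U\subseteq\mathcal V,0\in\mathcal U,n\notin\mathcal U\}$ is assumed to satisfy $C^*>1$. Perturbation: $\Phi:=I-|\mathcal P|^{-1}\mathbf 1\mathbf 1'$; interiors $\mathrm{int}$ and boundaries $\partial$ of subsets of $\mathcal S(\mathcal P)$ are relative to the hyperplane $\{x:\mathbf 1'x=1\}$. An admissible perturbation is a function $h:\Pi_h\to\mathbb R$, where $\Pi_h\subseteq\Pi$ is closed in $\mathbb R^{\mathcal P}$, convex, with nonempty interior, $h$ is strictly convex, twice differentiable on $\mathrm{int}(\Pi_h)$, and $\|\tilde\nabla h(\pi)\|\to+\infty$ as $\pi\to\partial\Pi_h$, where $\tilde\nabla h:=\Phi\nabla h$. Its perturbed best response is $F^h(f):=\arg\min_{\omega\in\Pi_h}\{\omega'A'T(f)+h(\omega)\}$ for $f\in\mathcal F$. Define $\psi^h(\pi):=\sum_{e\in\mathcal E}\int_0^{(A\pi)_e}T_e(s)\,ds+h(\pi)$ for $\pi\in\Pi_h$. *)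

(* Defs.v *)
From Stdlib Require Import Reals Lra List ClassicalEpsilon.
Import ListNotations.
Open Scope R_scope.

Definition edge := (nat * nat)%type.
Definition path := list edge.

Definition edge_eq_dec : forall x y : edge, {x = y} + {x <> y}.
Proof. decide equality; apply Nat.eq_dec. Defined.

Definition lsum {A : Type} (l : list A) (f : A -> R) : R :=
  fold_right (fun a s => f a + s) 0 l.

Fixpoint walk (E : list edge) (a b : nat) (p : path) : Prop :=
  match p with
  | [] => a = b
  | (u, v) :: q => u = a /\ In (u, v) E /\ walk E v b q
  end.

Definition network (n : nat) (E : list edge) : Prop :=
  NoDup E /\
  (forall u v, In (u, v) E -> (u < v)%nat /\ (v <= n)%nat) /\
  (forall v, (v <= n)%nat -> ((forall u, ~ In (u, v) E) <-> v = 0%nat)) /\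
  (forall u, (u <= n)%nat -> ((forall v, ~ In (u, v) E) <-> u = n)) /\
  (forall u, (u <= n)%nat -> exists p, walk E u n p).

Definition path_enum (n : nat) (E : list edge) (P : list path) : Prop :=
  NoDup P /\ forall p, In p P <-> walk E 0 n p.

(* flow-density function m on [0,oo) with derivative m' (right derivative at 0) *)
Definition flow_density (m m' : R -> R) : Prop :=
  m 0 = 0 /\
  (forall x, 0 <= x -> 0 <= m x) /\
  (forall x y, 0 <= x -> x < y -> m x < m y) /\
  (forall x y t, 0 <= x -> 0 <= y -> x <> y -> 0 < t < 1 ->
      t * m x + (1 - t) * m y < m (t * x + (1 - t) * y)) /\
  (forall x, 0 < x -> derivable_pt_lim m x (m' x)) /\
  (forall eps, 0 < eps -> exists del, 0 < del /\
      forall y, 0 < y < del -> Rabs ((m y - m 0) / y - m' 0) < eps) /\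
  (forall x, 0 <= x -> forall eps, 0 < eps -> exists del, 0 < del /\
      forall y, 0 <= y -> Rabs (y - x) < del -> Rabs (m' y - m' x) < eps).

(* x < C = lim_{r->oo} m r  (m increasing, so C = sup m) *)
Definition below_cap (m : R -> R) (x : R) : Prop := exists r, 0 <= r /\ x < m r.

(* C^* > 1: every 0-n cut has total capacity > 1 *)
Definition mincut_gt1 (n : nat) (E : list edge) (mu : edge -> R -> R) : Prop :=
  forall U : nat -> bool, U 0%nat = true -> U n = false ->
    exists r, 0 <= r /\
      1 < lsum (filter (fun e => andb (U (fst e)) (negb (U (snd e)))) E) (fun e => mu e r).

Definition muinv (m : R -> R) (f : R) : R :=
  epsilon (inhabits 0) (fun r => 0 <= r /\ m r = f).

Definition delay (m m' : R -> R) (f : R) : R :=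
  if Req_EM_T f 0 then / m' 0 else muinv m f / f.

Definition Rint (f : R -> R) (a b : R) : R :=
  match excluded_middle_informative (inhabited (Riemann_integrable f a b)) with
  | left H => RiemannInt (epsilon H (fun _ => True))
  | right _ => 0
  end.

(* vectors in R^P are functions path -> R vanishing outside P *)
Definition supp (P : list path) (x : path -> R) : Prop := forall p, ~ In p P -> x p = 0.
Definition vadd (x y : path -> R) : path -> R := fun p => x p + y p.
Definition vsub (x y : path -> R) : path -> R := fun p => x p - y p.
Definition vscale (c : R) (x : path -> R) : path -> R := fun p => c * x p.
Definition comb (t : R) (x y : path -> R) : path -> R := fun p => t * x p + (1 - t) * y p.
Definition vdot (P : list path) (x y : path -> R) : R := lsum P (fun p => x p * y p).
Definition vnorm (P : list path) (x : path -> R) : R := sqrt (lsum P (fun p => x p ^ 2)).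
Definition Phi (P : list path) (x : path -> R) : path -> R :=
  fun p => x p - lsum P x / INR (length P).

Definition Aflow (P : list path) (pi : path -> R) (e : edge) : R :=
  lsum P (fun p => if in_dec edge_eq_dec e p then pi p else 0).

Definition simplex (P : list path) (x : path -> R) : Prop :=
  supp P x /\ (forall p, In p P -> 0 <= x p) /\ lsum P x = 1.

Definition PiSet (E : list edge) (P : list path) (mu : edge -> R -> R) (x : path -> R) : Prop :=
  simplex P x /\ forall e, In e E -> below_cap (mu e) (Aflow P x e).

(* topology relative to the hyperplane 1'x = 1 *)
Definition hyper (P : list path) (x : path -> R) : Prop := supp P x /\ lsum P x = 1.
Definition tangent (P : list path) (v : path -> R) : Prop := supp P v /\ lsum P v = 0.

Definition rel_int (P : list path) (K : (path -> R) -> Prop) (x : path -> R) : Prop :=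
  K x /\ exists eps, 0 < eps /\
    forall y, hyper P y -> vnorm P (vsub y x) < eps -> K y.

Definition rel_closure (P : list path) (K : (path -> R) -> Prop) (x : path -> R) : Prop :=
  hyper P x /\ forall eps, 0 < eps -> exists y, K y /\ vnorm P (vsub y x) < eps.

Definition rel_boundary (P : list path) (K : (path -> R) -> Prop) (x : path -> R) : Prop :=
  rel_closure P K x /\ ~ rel_int P K x.

Definition closed_set (P : list path) (K : (path -> R) -> Prop) : Prop :=
  forall x, supp P x ->
    (forall eps, 0 < eps -> exists y, K y /\ vnorm P (vsub y x) < eps) -> K x.

Definition convex_set (K : (path -> R) -> Prop) : Prop :=
  forall x y t, K x -> K y -> 0 <= t <= 1 -> K (comb t x y).

Definition strictly_convex_on (K : (path -> R) -> Prop) (f : (path -> R) -> R) : Prop :=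
  forall x y t, K x -> K y -> x <> y -> 0 < t < 1 ->
    f (comb t x y) < t * f x + (1 - t) * f y.

Definition has_rel_grad (P : list path) (K : (path -> R) -> Prop)
    (f : (path -> R) -> R) (x G : path -> R) : Prop :=
  forall eps, 0 < eps -> exists del, 0 < del /\
    forall v, tangent P v -> vnorm P v < del -> K (vadd x v) ->
      Rabs (f (vadd x v) - f x - vdot P G v) <= eps * vnorm P v.

Definition has_rel_deriv_map (P : list path) (K : (path -> R) -> Prop)
    (F : (path -> R) -> path -> R) (x : path -> R) (L : (path -> R) -> path -> R) : Prop :=
  (forall v w, tangent P v -> tangent P w -> forall p, In p P ->
      L (vadd v w) p = L v p + L w p) /\
  (forall c v, tangent P v -> forall p, In p P -> L (vscale c v) p = c * L v p) /\
  (forall eps, 0 < eps -> exists del, 0 < del /\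
    forall v, tangent P v -> vnorm P v < del -> K (vadd x v) ->
      vnorm P (vsub (vsub (F (vadd x v)) (F x)) (L v)) <= eps * vnorm P v).

(* admissible perturbation h : Pih -> R, with gradient field g (so that
   tilde-nabla h = Phi P o g on the relative interior) *)
Definition admissible (E : list edge) (P : list path) (mu : edge -> R -> R)
    (Pih : (path -> R) -> Prop) (h : (path -> R) -> R) (g : (path -> R) -> path -> R) : Prop :=
  (forall x, Pih x -> PiSet E P mu x) /\
  closed_set P Pih /\ convex_set Pih /\ (exists x, rel_int P Pih x) /\
  strictly_convex_on Pih h /\
  (forall x, rel_int P Pih x -> has_rel_grad P Pih h x (g x)) /\
  (forall x, rel_int P Pih x -> exists L, has_rel_deriv_map P Pih (fun y => Phi P (g y)) x L) /\
  (forall x0, rel_boundary P Pih x0 -> forall M, exists del, 0 < del /\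
      forall x, rel_int P Pih x -> vnorm P (vsub x x0) < del -> M < vnorm P (Phi P (g x))).

Definition argmin (K : (path -> R) -> Prop) (phi : (path -> R) -> R) : path -> R :=
  epsilon (inhabits (fun _ : path => 0))
    (fun w => K w /\ forall w', K w' -> phi w <= phi w').

Definition is_min (K : (path -> R) -> Prop) (phi : (path -> R) -> R) (w : path -> R) : Prop :=
  K w /\ forall w', K w' -> phi w <= phi w'.

Definition Fh (E : list edge) (P : list path) (mu mu' : edge -> R -> R)
    (Pih : (path -> R) -> Prop) (h : (path -> R) -> R) (f : edge -> R) : path -> R :=
  argmin Pih (fun w => lsum E (fun e => Aflow P w e * delay (mu e) (mu' e) (f e)) + h w).

Definition psi (E : list edge) (P : list path) (mu mu' : edge -> R -> R)
    (h : (path -> R) -> R) (pi : path -> R) : R :=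
  lsum E (fun e => Rint (delay (mu e) (mu' e)) 0 (Aflow P pi e)) + h pi.

Definition Upsilon (E : list edge) (P : list path) (mu mu' : edge -> R -> R)
    (Pih : (path -> R) -> Prop) (h : (path -> R) -> R) (g : (path -> R) -> path -> R)
    (pi : path -> R) : R :=
  let w := Fh E P mu mu' Pih h (Aflow P pi) in
  vdot P (vsub (Phi P (g w)) (Phi P (g pi))) (vsub w pi).

(* Main.v *)
Require Import Defs.
From Stdlib Require Import Reals List.
From Stdlib Require Import Lra ClassicalEpsilon FunctionalExtensionality Classical Arith Lia.
Import ListNotations.
Open Scope R_scope.


Section LS.
Context {A : Type}.

Lemma lsum_nil (f : A -> R) : lsum [] f = 0.
Proof. reflexivity. Qed.
Lemma lsum_cons a l (f : A -> R) : lsum (a :: l) f = f a + lsum l f.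
Proof. reflexivity. Qed.

Lemma lsum_ext (l : list A) f g : (forall a, In a l -> f a = g a) -> lsum l f = lsum l g.
Proof. induction l; simpl; intros H; auto. rewrite H by auto. rewrite IHl; auto. Qed.

Lemma lsum_plus (l : list A) f g : lsum l (fun a => f a + g a) = lsum l f + lsum l g.
Proof. induction l; simpl; [lra|]. rewrite IHl; ring. Qed.

Lemma lsum_minus (l : list A) f g : lsum l (fun a => f a - g a) = lsum l f - lsum l g.
Proof. induction l; simpl; [lra|]. rewrite IHl; ring. Qed.

Lemma lsum_scal (l : list A) c f : lsum l (fun a => c * f a) = c * lsum l f.
Proof. induction l; simpl; [lra|]. rewrite IHl; ring. Qed.

Lemma lsum_scalr (l : list A) c f : lsum l (fun a => f a * c) = lsum l f * c.
Proof. induction l; simpl; [lra|]. rewrite IHl; ring. Qed.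

Lemma lsum_zero (l : list A) : lsum l (fun _ => 0) = 0.
Proof. induction l; simpl; lra. Qed.

Lemma lsum_const (l : list A) c : lsum l (fun _ => c) = INR (length l) * c.
Proof. induction l; [simpl; lra|]. rewrite lsum_cons, IHl. change (length (a::l)) with (S (length l)). rewrite S_INR; ring. Qed.

Lemma lsum_le (l : list A) f g : (forall a, In a l -> f a <= g a) -> lsum l f <= lsum l g.
Proof. induction l; simpl; intros H; [lra|]. pose proof (H a (or_introl eq_refl)).
  assert (lsum l f <= lsum l g) by (apply IHl; auto). lra. Qed.

Lemma lsum_nonneg (l : list A) f : (forall a, In a l -> 0 <= f a) -> 0 <= lsum l f.
Proof. intros H. rewrite <- (lsum_zero l). apply lsum_le; auto. Qed.

Lemma lsum_term (l : list A) f a : (forall b, In b l -> 0 <= f b) -> In a l -> f a <= lsum l f.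
Proof. induction l; simpl; intros H Ha; [contradiction|].
  destruct Ha as [->|Ha].
  - assert (0 <= lsum l f) by (apply lsum_nonneg; auto). lra.
  - assert (f a <= lsum l f) by (apply IHl; auto). specialize (H a0 (or_introl eq_refl)). lra.
Qed.

Lemma lsum_abs (l : list A) f : Rabs (lsum l f) <= lsum l (fun a => Rabs (f a)).
Proof. induction l; simpl. rewrite Rabs_R0; lra.
  eapply Rle_trans; [apply Rabs_triang|]. lra. Qed.

Lemma lsum_lt (l : list A) f g a : (forall b, In b l -> f b <= g b) -> In a l -> f a < g a -> lsum l f < lsum l g.
Proof. induction l; simpl; intros H Ha Hlt; [contradiction|].
  destruct Ha as [->|Ha].
  - assert (lsum l f <= lsum l g) by (apply lsum_le; auto). lra.
  - assert (lsum l f < lsum l g) by (apply IHl; auto). specialize (H a0 (or_introl eq_refl)). lra.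
Qed.

End LS.

Lemma lsum_swap {A B : Type} (l1 : list A) (l2 : list B) F :
  lsum l1 (fun a => lsum l2 (fun b => F a b)) = lsum l2 (fun b => lsum l1 (fun a => F a b)).
Proof. induction l1; simpl. rewrite lsum_zero; auto.
  rewrite IHl1, <- lsum_plus. reflexivity. Qed.

Lemma vnorm_ge0 P v : 0 <= vnorm P v.
Proof. apply sqrt_pos. Qed.

Lemma sumsq_ge0 P (v : path -> R) : 0 <= lsum P (fun p => v p ^ 2).
Proof. apply lsum_nonneg; intros; apply pow2_ge_0. Qed.

Lemma vnorm_coord P v p : In p P -> Rabs (v p) <= vnorm P v.
Proof. intros Hp. unfold vnorm. rewrite <- sqrt_Rsqr_abs. apply sqrt_le_1_alt.
  unfold Rsqr. replace (v p * v p) with (v p ^ 2) by ring.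
  apply (lsum_term P (fun p => v p ^2)); auto. intros; apply pow2_ge_0. Qed.

Lemma vnorm_le_l1 P v : vnorm P v <= lsum P (fun p => Rabs (v p)).
Proof. unfold vnorm. rewrite <- (sqrt_Rsqr (lsum P (fun p => Rabs (v p)))).
  2: apply lsum_nonneg; intros; apply Rabs_pos.
  apply sqrt_le_1_alt. unfold Rsqr. induction P; [simpl; lra|]. rewrite !lsum_cons.
  assert (0 <= lsum P (fun p => Rabs (v p))) by (apply lsum_nonneg; intros; apply Rabs_pos).
  assert (v a ^ 2 = Rabs (v a) * Rabs (v a)) by (rewrite <- Rabs_mult; rewrite Rabs_pos_eq; [ring| apply Rle_0_sqr]).
  assert (0 <= Rabs (v a)) by apply Rabs_pos. rewrite H0.
  set (S := lsum P (fun p => Rabs (v p))) in *. set (a' := Rabs (v a)) in *. nra. Qed.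

Lemma vnorm_scale P c v : vnorm P (vscale c v) = Rabs c * vnorm P v.
Proof. unfold vnorm, vscale.
  rewrite (lsum_ext P _ (fun p => c^2 * v p ^ 2)) by (intros; ring).
  rewrite lsum_scal, sqrt_mult by (apply pow2_ge_0 || apply sumsq_ge0).
  f_equal. rewrite <- sqrt_Rsqr_abs. unfold Rsqr. f_equal; ring. Qed.

Lemma vnorm_zero P v : vnorm P v = 0 -> forall p, In p P -> v p = 0.
Proof. intros H p Hp. pose proof (vnorm_coord P v p Hp). rewrite H in H0.
  pose proof (Rabs_pos (v p)). assert (Rabs (v p) = 0) by lra.
  destruct (Req_dec (v p) 0); auto. exfalso; apply Rabs_no_R0 in H3; auto. Qed.

Lemma vnorm_sq P v : vnorm P v * vnorm P v = lsum P (fun p => v p ^ 2).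
Proof. unfold vnorm. apply sqrt_sqrt. apply sumsq_ge0. Qed.

Lemma vnorm_ext P v w : (forall p, In p P -> v p = w p) -> vnorm P v = vnorm P w.
Proof. intros H; unfold vnorm; f_equal; apply lsum_ext; intros; rewrite H; auto. Qed.

Lemma vdot_abs_le P a v : Rabs (vdot P a v) <= lsum P (fun p => Rabs (a p)) * vnorm P v.
Proof. unfold vdot. eapply Rle_trans; [apply lsum_abs|]. rewrite <- lsum_scalr.
  apply lsum_le; intros p Hp. rewrite Rabs_mult. apply Rmult_le_compat_l; [apply Rabs_pos|].
  apply vnorm_coord; auto. Qed.

Lemma vdot_abs_le1 P a v : (forall p, In p P -> Rabs (v p) <= 1) -> Rabs (vdot P a v) <= lsum P (fun p => Rabs (a p)).
Proof. intros H. unfold vdot. eapply Rle_trans; [apply lsum_abs|].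
  apply lsum_le; intros p Hp. rewrite Rabs_mult. specialize (H p Hp).
  pose proof (Rabs_pos (a p)). nra. Qed.

Lemma Rabs_le_inv a b : Rabs a <= b -> - b <= a <= b.
Proof. unfold Rabs; destruct (Rcase_abs a); lra. Qed.
Lemma Rabs_lt_inv a b : Rabs a < b -> - b < a < b.
Proof. unfold Rabs; destruct (Rcase_abs a); lra. Qed.


Definition convex_on (K : (path -> R) -> Prop) (f : (path -> R) -> R) : Prop :=
  forall x y t, K x -> K y -> 0 <= t <= 1 -> f (comb t x y) <= t * f x + (1 - t) * f y.

Lemma comb_same t x : comb t x x = x.
Proof. apply functional_extensionality; intros p; unfold comb; ring. Qed.
Lemma comb_0 x y : comb 0 x y = y.
Proof. apply functional_extensionality; intros p; unfold comb; ring. Qed.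
Lemma comb_1 x y : comb 1 x y = x.
Proof. apply functional_extensionality; intros p; unfold comb; ring. Qed.

Lemma strict_convex_on K f : strictly_convex_on K f -> convex_on K f.
Proof. intros H x y t Hx Hy Ht.
  destruct (classic (x = y)) as [<-|Hne].
  { rewrite comb_same. lra. }
  destruct (Req_dec t 0) as [->|H0]. { rewrite comb_0. lra. }
  destruct (Req_dec t 1) as [->|H1]. { rewrite comb_1. lra. }
  apply Rlt_le, H; auto; lra. Qed.

Lemma convex_on_plus K f h : convex_on K f -> convex_on K h -> convex_on K (fun w => f w + h w).
Proof. intros Hf Hh x y t Hx Hy Ht. pose proof (Hf x y t Hx Hy Ht). pose proof (Hh x y t Hx Hy Ht). lra. Qed.

Lemma strict_convex_plus K f h : convex_on K f -> strictly_convex_on K h -> strictly_convex_on K (fun w => f w + h w).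
Proof. intros Hf Hh x y t Hx Hy Hne Ht. pose proof (Hf x y t Hx Hy (conj (Rlt_le _ _ (proj1 Ht)) (Rlt_le _ _ (proj2 Ht)))).
  pose proof (Hh x y t Hx Hy Hne Ht). lra. Qed.

Lemma simplex_hyper P x : simplex P x -> hyper P x.
Proof. intros [H1 [H2 H3]]; split; auto. Qed.

Lemma simplex_coord P x p : simplex P x -> In p P -> 0 <= x p <= 1.
Proof. intros [H1 [H2 H3]] Hp. split; auto. rewrite <- H3. apply lsum_term; auto. Qed.

Lemma tangent_sub P w x : hyper P w -> hyper P x -> tangent P (vsub w x).
Proof. intros [Hw1 Hw2] [Hx1 Hx2]; split.
  - intros p Hp; unfold vsub; rewrite Hw1, Hx1; auto; ring.
  - unfold vsub; rewrite lsum_minus; lra. Qed.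

Lemma tangent_scale P c v : tangent P v -> tangent P (vscale c v).
Proof. intros [H1 H2]; split.
  - intros p Hp; unfold vscale; rewrite H1; auto; ring.
  - unfold vscale; rewrite lsum_scal, H2; ring. Qed.

Lemma hyper_comb P t x y : hyper P x -> hyper P y -> hyper P (comb t x y).
Proof. intros [Hx1 Hx2] [Hy1 Hy2]; split.
  - intros p Hp; unfold comb; rewrite Hx1, Hy1; auto; ring.
  - unfold comb; rewrite lsum_plus, !lsum_scal, Hx2, Hy2; ring. Qed.

Lemma hyper_vadd P x v : hyper P x -> tangent P v -> hyper P (vadd x v).
Proof. intros [Hx1 Hx2] [Hv1 Hv2]; split.
  - intros p Hp; unfold vadd; rewrite Hx1, Hv1; auto; ring.
  - unfold vadd; rewrite lsum_plus, Hx2, Hv2; ring. Qed.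

Lemma comb_vadd t w x : comb t w x = vadd x (vscale t (vsub w x)).
Proof. apply functional_extensionality; intros p; unfold comb, vadd, vscale, vsub; ring. Qed.

Lemma vdot_scale P a c v : vdot P a (vscale c v) = c * vdot P a v.
Proof. unfold vdot, vscale. rewrite <- lsum_scal. apply lsum_ext; intros; ring. Qed.

Lemma vdot_Phi P a v : tangent P v -> vdot P (Phi P a) v = vdot P a v.
Proof. intros [H1 H2]. unfold vdot, Phi.
  rewrite (lsum_ext P _ (fun p => a p * v p - (lsum P a / INR (length P)) * v p)) by (intros; ring).
  rewrite lsum_minus, lsum_scal, H2; ring. Qed.

Lemma eps_arg a b c : 0 <= c -> (forall eps, 0 < eps -> a >= b - eps * c) -> a >= b.
Proof. intros Hc H. destruct (Rge_dec a b) as [|Hn]; auto. exfalso.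
  assert (Hp : 0 < (b - a) / (2 * (c + 1))) by (apply Rdiv_lt_0_compat; lra).
  specialize (H _ Hp). 
  assert ((b - a) / (2 * (c + 1)) * c < b - a).
  { unfold Rdiv. rewrite Rmult_assoc. rewrite <- (Rmult_1_r (b - a)) at 2. apply Rmult_lt_compat_l; [lra|].
    apply (Rmult_lt_reg_l (2 * (c+1))); [lra|]. field_simplify; lra. }
  lra. Qed.

Lemma seg_step P K f x G w eps :
  convex_set K -> K x -> K w -> hyper P x -> hyper P w ->
  has_rel_grad P K f x G -> 0 < eps ->
  exists t, 0 < t <= 1 /\ K (comb t w x) /\
    Rabs (f (comb t w x) - f x - t * vdot P G (vsub w x)) <= eps * t * vnorm P (vsub w x).
Proof. intros Hc Kx Kw Hx Hw HG He.
  destruct (HG eps He) as [del [Hd Hdel]].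
  set (d := vsub w x). set (N := vnorm P d).
  assert (HN : 0 <= N) by apply vnorm_ge0.
  set (t := Rmin (1/2) (del / (2 * (N + 1)))).
  assert (Ht : 0 < t) by (unfold t; apply Rmin_glb_lt; [lra| apply Rdiv_lt_0_compat; lra]).
  assert (Ht1 : t <= 1/2) by apply Rmin_l.
  assert (Ht2 : t <= del / (2 * (N + 1))) by apply Rmin_r.
  exists t. split; [lra|].
  assert (Kc : K (comb t w x)) by (apply Hc; auto; lra). split; auto.
  rewrite comb_vadd in *. fold d in Kc |- *.
  assert (Hvn : vnorm P (vscale t d) = t * N) by (rewrite vnorm_scale, Rabs_pos_eq; [reflexivity|lra]).
  assert (Hlt : vnorm P (vscale t d) < del).
  { rewrite Hvn. assert (t * N <= del / (2 * (N+1)) * N) by (apply Rmult_le_compat_r; auto).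
    assert (del / (2 * (N + 1)) * N < del).
    { unfold Rdiv. rewrite Rmult_assoc. rewrite <- (Rmult_1_r del) at 2. apply Rmult_lt_compat_l; [lra|].
      apply (Rmult_lt_reg_l (2 * (N+1))); [lra|]. field_simplify; lra. }
    lra. }
  specialize (Hdel (vscale t d) (tangent_scale P t d (tangent_sub P w x Hw Hx)) Hlt Kc).
  rewrite vdot_scale, Hvn in Hdel. replace (eps * t * N) with (eps * (t * N)) by ring. exact Hdel.
Qed.

Lemma grad_ineq P K f x G w :
  convex_set K -> convex_on K f -> K x -> K w -> hyper P x -> hyper P w ->
  has_rel_grad P K f x G -> f w >= f x + vdot P G (vsub w x).
Proof. intros Hc Hf Kx Kw Hx Hw HG.
  assert (f w - f x >= vdot P G (vsub w x)).
  { apply (eps_arg _ _ (vnorm P (vsub w x))); [apply vnorm_ge0|]. intros eps He.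
    destruct (seg_step P K f x G w eps Hc Kx Kw Hx Hw HG He) as [t [Ht [Kc Hest]]].
    pose proof (Hf w x t Kw Kx ltac:(lra)).
    apply Rabs_le_inv in Hest. destruct Hest as [Hest _].
    assert (t * (f w - f x) >= t * (vdot P G (vsub w x) - eps * vnorm P (vsub w x))) by nra.
    apply Rle_ge, (Rmult_le_reg_l t); [lra|]; lra. }
  lra. Qed.

Lemma foc P K f x G w :
  convex_set K -> K x -> K w -> hyper P x -> hyper P w ->
  has_rel_grad P K f x G -> (forall w', K w' -> f x <= f w') -> vdot P G (vsub w x) >= 0.
Proof. intros Hc Kx Kw Hx Hw HG Hmin.
  apply (eps_arg _ _ (vnorm P (vsub w x))); [apply vnorm_ge0|]. intros eps He.
  destruct (seg_step P K f x G w eps Hc Kx Kw Hx Hw HG He) as [t [Ht [Kc Hest]]].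
  pose proof (Hmin _ Kc).
  apply Rabs_le_inv in Hest. destruct Hest as [_ Hest].
  assert (t * vdot P G (vsub w x) >= t * (0 - eps * vnorm P (vsub w x))) by nra.
  apply Rle_ge, (Rmult_le_reg_l t); [lra|]; lra. Qed.

Lemma grad_plus P K f h x G1 G2 :
  has_rel_grad P K f x G1 -> has_rel_grad P K h x G2 ->
  has_rel_grad P K (fun w => f w + h w) x (vadd G1 G2).
Proof. intros H1 H2 eps He.
  destruct (H1 (eps/2) ltac:(lra)) as [d1 [Hd1 H1']].
  destruct (H2 (eps/2) ltac:(lra)) as [d2 [Hd2 H2']].
  exists (Rmin d1 d2). split; [apply Rmin_glb_lt; auto|]. intros v Hv Hn Kv.
  specialize (H1' v Hv (Rlt_le_trans _ _ _ Hn (Rmin_l _ _)) Kv).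
  specialize (H2' v Hv (Rlt_le_trans _ _ _ Hn (Rmin_r _ _)) Kv).
  assert (vdot P (vadd G1 G2) v = vdot P G1 v + vdot P G2 v).
  { unfold vdot, vadd. rewrite <- lsum_plus. apply lsum_ext; intros; ring. }
  rewrite H.
  replace (f (vadd x v) + h (vadd x v) - (f x + h x) - (vdot P G1 v + vdot P G2 v))
    with ((f (vadd x v) - f x - vdot P G1 v) + (h (vadd x v) - h x - vdot P G2 v)) by ring.
  eapply Rle_trans; [apply Rabs_triang|]. lra. Qed.

Lemma strict_mono P K h x y gx gy :
  convex_set K -> strictly_convex_on K h -> K x -> K y -> hyper P x -> hyper P y -> x <> y ->
  has_rel_grad P K h x gx -> has_rel_grad P K h y gy ->
  vdot P (vsub gy gx) (vsub y x) > 0.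
Proof. intros Hc Hh Kx Ky Hx Hy Hne Hgx Hgy.
  set (z := comb (1/2) x y).
  assert (Kz : K z) by (apply Hc; auto; lra).
  assert (Hz : hyper P z) by (apply hyper_comb; auto).
  pose proof (Hh x y (1/2) Kx Ky Hne ltac:(lra)) as Hs. fold z in Hs.
  pose proof (grad_ineq P K h x gx z Hc (strict_convex_on _ _ Hh) Kx Kz Hx Hz Hgx) as G1.
  pose proof (grad_ineq P K h y gy z Hc (strict_convex_on _ _ Hh) Ky Kz Hy Hz Hgy) as G2.
  assert (E1 : vdot P gx (vsub z x) = 1/2 * vdot P gx (vsub y x)).
  { unfold vdot, vsub, z, comb. rewrite <- lsum_scal. apply lsum_ext; intros; field. }
  assert (E2 : vdot P gy (vsub z y) = - (1/2) * vdot P gy (vsub y x)).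
  { unfold vdot, vsub, z, comb. rewrite <- lsum_scal. apply lsum_ext; intros; field. }
  assert (E3 : vdot P (vsub gy gx) (vsub y x) = vdot P gy (vsub y x) - vdot P gx (vsub y x)).
  { unfold vdot, vsub. rewrite <- lsum_minus. apply lsum_ext; intros; ring. }
  lra. Qed.


Lemma small_inv eps : 0 < eps -> exists N, forall k, (N <= k)%nat -> / (INR k + 1) < eps.
Proof. intros He. destruct (INR_archimed eps 1) as [N HN]; [lra|]. exists N. intros k Hk.
  apply le_INR in Hk. pose proof (pos_INR N).
  apply (Rmult_lt_reg_l (INR k + 1)); [lra|]. rewrite Rinv_r by lra. nra. Qed.

Definition sincr (phi : nat -> nat) := forall k, (phi k < phi (S k))%nat.

Lemma sincr_ge phi : sincr phi -> forall k, (k <= phi k)%nat.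
Proof. intros H k; induction k; [lia|]. specialize (H k). lia. Qed.

Lemma sincr_mono phi : sincr phi -> forall i j, (i < j)%nat -> (phi i < phi j)%nat.
Proof. intros H i j Hij. induction j; [lia|]. destruct (Nat.eq_dec i j) as [->|]; [apply H|].
  specialize (H j). assert (phi i < phi j)%nat by (apply IHj; lia). lia. Qed.

Lemma sincr_comp phi psi : sincr phi -> sincr psi -> sincr (fun k => phi (psi k)).
Proof. intros H1 H2 k. apply sincr_mono; auto. Qed.

Lemma Un_cv_sub (v : nat -> R) l psi : sincr psi -> Un_cv v l -> Un_cv (fun k => v (psi k)) l.
Proof. intros Hs H eps He. destruct (H eps He) as [N HN]. exists N. intros k Hk.
  apply HN. pose proof (sincr_ge psi Hs k). lia. Qed.

Lemma bw1 (v : nat -> R) : (forall k, 0 <= v k <= 1) ->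
  exists psi l, sincr psi /\ Un_cv (fun k => v (psi k)) l.
Proof. intros Hv.
  destruct (Bolzano_Weierstrass v (fun c => 0 <= c <= 1) (compact_P3 0 1) Hv) as [l Hl].
  assert (Hsel : forall N k : nat, exists p, (N <= p)%nat /\ Rabs (v p - l) < / (INR k + 1)).
  { intros N k. assert (Hp : 0 < / (INR k + 1)) by (apply Rinv_0_lt_compat; pose proof (pos_INR k); lra).
    destruct (Hl (disc l (mkposreal _ Hp)) N) as [p [Hp1 Hp2]].
    - exists (mkposreal _ Hp). intros y Hy; exact Hy.
    - exists p; split; auto. }
  set (sel := fun N k => epsilon (inhabits 0%nat) (fun p => (N <= p)%nat /\ Rabs (v p - l) < / (INR k + 1))).
  assert (Hsel' : forall N k, (N <= sel N k)%nat /\ Rabs (v (sel N k) - l) < / (INR k + 1)).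
  { intros N k. unfold sel. apply epsilon_spec. apply Hsel. }
  set (psi := fix f (k : nat) : nat := match k with O => sel O O | S k' => sel (S (f k')) (S k') end).
  exists psi, l. split.
  - intros k. simpl. destruct (Hsel' (S (psi k)) (S k)). lia.
  - intros eps He. destruct (small_inv eps He) as [N HN]. exists N. intros k Hk.
    unfold Rdist. apply Rlt_trans with (/ (INR k + 1)); [|apply HN; lia].
    destruct k; simpl; [apply Hsel'|]. apply Hsel'.
Qed.

Lemma path_eq_dec : forall x y : path, {x = y} + {x <> y}.
Proof. apply list_eq_dec, edge_eq_dec. Defined.

Lemma bwP (l : list path) (u : nat -> path -> R) :
  (forall k p, In p l -> 0 <= u k p <= 1) ->
  exists phi x, sincr phi /\ forall p, In p l -> Un_cv (fun k => u (phi k) p) (x p).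
Proof. induction l as [|a l IH]; intros Hu.
  - exists (fun k => k), (fun _ => 0). split; [intros k; lia|]. intros p [].
  - destruct IH as [phi [x [Hphi Hx]]]. { intros k p Hp; apply Hu; simpl; auto. }
    destruct (bw1 (fun k => u (phi k) a)) as [psi [la [Hpsi Hla]]].
    { intros k; apply Hu; simpl; auto. }
    exists (fun k => phi (psi k)), (fun p => if path_eq_dec p a then la else x p). split.
    + apply sincr_comp; auto.
    + intros p Hp. destruct (path_eq_dec p a) as [->|Hne]; auto.
      destruct Hp as [Hp|Hp]; [congruence|].
      apply (Un_cv_sub (fun k => u (phi k) p)); auto.
Qed.

Lemma finite_N {A : Type} (l : list A) (Q : A -> nat -> Prop) :
  (forall a, In a l -> exists N, forall k, (N <= k)%nat -> Q a k) ->
  exists N, forall a, In a l -> forall k, (N <= k)%nat -> Q a k.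
Proof. induction l as [|b l IH]; intros H.
  - exists O; intros a [].
  - destruct IH as [N1 HN1]. { intros a Ha; apply H; simpl; auto. }
    destruct (H b (or_introl eq_refl)) as [N2 HN2].
    exists (max N1 N2). intros a [<-|Ha] k Hk; [apply HN2; lia| apply HN1; auto; lia].
Qed.

Lemma finite_del {A : Type} (l : list A) (Q : A -> R -> Prop) :
  (forall a d d', 0 < d' <= d -> Q a d -> Q a d') ->
  (forall a, In a l -> exists d, 0 < d /\ Q a d) ->
  exists d, 0 < d /\ forall a, In a l -> Q a d.
Proof. intros Hm. induction l as [|b l IH]; intros H.
  - exists 1; split; [lra|]; intros a [].
  - destruct IH as [d1 [Hd1 HN1]]. { intros a Ha; apply H; simpl; auto. }
    destruct (H b (or_introl eq_refl)) as [d2 [Hd2 HN2]].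
    exists (Rmin d1 d2). split; [apply Rmin_glb_lt; auto|].
    intros a [<-|Ha].
    + apply (Hm _ d2); auto. split; [apply Rmin_glb_lt; auto| apply Rmin_r].
    + apply (Hm _ d1); auto. split; [apply Rmin_glb_lt; auto| apply Rmin_l].
Qed.

Lemma cv_vnorm P (v : nat -> path -> R) x :
  (forall p, In p P -> Un_cv (fun k => v k p) (x p)) ->
  forall eps, 0 < eps -> exists N, forall k, (N <= k)%nat -> vnorm P (vsub (v k) x) < eps.
Proof. intros H eps He.
  set (e' := eps / (INR (length P) + 1)).
  assert (He' : 0 < e') by (unfold e'; apply Rdiv_lt_0_compat; [lra| pose proof (pos_INR (length P)); lra]).
  destruct (finite_N P (fun p k => Rabs (v k p - x p) < e')) as [N HN].
  { intros p Hp. destruct (H p Hp e' He') as [N HN]. exists N; intros k Hk; apply HN; auto. }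
  exists N; intros k Hk. eapply Rle_lt_trans; [apply vnorm_le_l1|].
  apply Rle_lt_trans with (lsum P (fun _ => e')).
  - apply lsum_le; intros p Hp; apply Rlt_le; unfold vsub; apply HN; auto.
  - rewrite lsum_const. unfold e'. pose proof (pos_INR (length P)).
    apply (Rmult_lt_reg_l (INR (length P) + 1)); [lra|]. field_simplify; [|lra]. nra.
Qed.


Lemma vsub_comb t z x : vsub (comb t z x) x = vscale t (vsub z x).
Proof. apply functional_extensionality; intros p; unfold vsub, comb, vscale; ring. Qed.

Lemma seg_int P K z x t :
  (forall w, K w -> simplex P w) -> convex_set K ->
  rel_int P K z -> K x -> 0 < t <= 1 -> rel_int P K (comb t z x).
Proof. intros Hs Hc [Kz [e0 [He0 Hz]]] Kx Ht.
  split; [apply Hc; auto; lra|].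
  exists (t * e0). split; [nra|]. intros w Hw Hn.
  assert (Hzh : hyper P z) by (apply simplex_hyper; auto).
  assert (Hxh : hyper P x) by (apply simplex_hyper; auto).
  set (c := comb t z x) in *.
  assert (Hch : hyper P c) by (apply hyper_comb; auto).
  set (z' := vadd z (vscale (/ t) (vsub w c))).
  assert (Hz' : K z').
  { apply Hz.
    - apply hyper_vadd; auto. apply tangent_scale, tangent_sub; auto.
    - replace (vsub z' z) with (vscale (/t) (vsub w c))
        by (apply functional_extensionality; intros p; unfold z', vsub, vadd, vscale; ring).
      rewrite vnorm_scale. rewrite Rabs_pos_eq by (apply Rlt_le, Rinv_0_lt_compat; lra).
      apply (Rmult_lt_reg_l t); [lra|]. rewrite <- Rmult_assoc, Rinv_r, Rmult_1_l by lra. exact Hn. }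
  replace w with (comb t z' x).
  - apply Hc; auto; lra.
  - apply functional_extensionality; intros p. unfold z', comb, vadd, vscale, vsub, c, comb. field. lra.
Qed.

Lemma lsum_Phi P G : P <> [] -> lsum P (Phi P G) = 0.
Proof. intros HP. unfold Phi. rewrite lsum_minus, lsum_const.
  assert (INR (length P) <> 0). { destruct P; [congruence|]. simpl length. rewrite S_INR. pose proof (pos_INR (length P)). lra. }
  field; auto. Qed.

Lemma dir_lemma P G : P <> [] -> 0 < vnorm P (Phi P G) ->
  exists u, tangent P u /\ vnorm P u = 1 /\ vdot P G u = vnorm P (Phi P G).
Proof. intros HP HN. set (N := vnorm P (Phi P G)) in *.
  set (u := fun p => if in_dec path_eq_dec p P then Phi P G p / N else 0).
  assert (Hu : forall p, In p P -> u p = / N * Phi P G p).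
  { intros p Hp; unfold u; destruct (in_dec path_eq_dec p P); [unfold Rdiv; ring| contradiction]. }
  assert (Ht : tangent P u).
  { split. - intros p Hp; unfold u; destruct (in_dec path_eq_dec p P); [contradiction|auto].
    - rewrite (lsum_ext P u (fun p => / N * Phi P G p)) by auto. rewrite lsum_scal, lsum_Phi; auto; ring. }
  exists u; split; auto; split.
  - rewrite (vnorm_ext P u (vscale (/N) (Phi P G))) by (intros; rewrite Hu; auto).
    rewrite vnorm_scale, Rabs_pos_eq by (apply Rlt_le, Rinv_0_lt_compat; lra). fold N. field; lra.
  - rewrite <- (vdot_Phi P G u Ht). unfold vdot.
    rewrite (lsum_ext P _ (fun p => / N * (Phi P G p ^ 2))) by (intros; rewrite Hu; auto; ring).
    rewrite lsum_scal, <- vnorm_sq. fold N. field; lra.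
Qed.

Lemma simplex_nonempty P x : simplex P x -> P <> [].
Proof. intros [_ [_ H]] ->. simpl in H. unfold lsum in H; simpl in H. lra. Qed.

Lemma coord_diff_le1 P K x y : (forall w, K w -> simplex P w) -> K x -> K y ->
  forall p, In p P -> Rabs (vsub x y p) <= 1.
Proof. intros Hs Kx Ky p Hp. pose proof (simplex_coord P x p (Hs x Kx) Hp).
  pose proof (simplex_coord P y p (Hs y Ky) Hp). unfold vsub. apply Rabs_le. lra. Qed.

Lemma exists_min (P : list path) (K : (path -> R) -> Prop) (f h : (path -> R) -> R)
    (g Gf : (path -> R) -> path -> R) :
  (forall x, K x -> simplex P x) ->
  Defs.closed_set P K -> convex_set K -> (exists x, rel_int P K x) ->
  convex_on K h -> (forall x, rel_int P K x -> has_rel_grad P K h x (g x)) ->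
  (forall x0, rel_boundary P K x0 -> forall M, exists del, 0 < del /\
      forall x, rel_int P K x -> vnorm P (vsub x x0) < del -> M < vnorm P (Phi P (g x))) ->
  convex_on K f -> (forall x, rel_int P K x -> has_rel_grad P K f x (Gf x)) ->
  (forall x0, K x0 -> exists B del, 0 < del /\ forall y, rel_int P K y ->
      vnorm P (vsub y x0) < del -> forall p, In p P -> Rabs (Gf y p) <= B) ->
  exists x, rel_int P K x /\ forall w, K w -> f x + h x <= f w + h w.
Proof.
  intros Hs Hcl Hc [z Hz] Hhc Hg Hblow Hfc Hgf Hloc.
  set (F := fun w => f w + h w).
  assert (Kz : K z) by apply Hz.
  assert (Hzh : hyper P z) by (apply simplex_hyper; auto).
  assert (HP : P <> []) by (apply (simplex_nonempty P z); auto).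
  set (Cz := lsum P (fun p => Rabs (Gf z p)) + lsum P (fun p => Rabs (g z p))).
  assert (Hlow : forall w, K w -> F w >= F z - Cz).
  { intros w Kw. assert (Hwh : hyper P w) by (apply simplex_hyper; auto).
    pose proof (grad_ineq P K f z (Gf z) w Hc Hfc Kz Kw Hzh Hwh (Hgf z Hz)).
    pose proof (grad_ineq P K h z (g z) w Hc Hhc Kz Kw Hzh Hwh (Hg z Hz)).
    pose proof (vdot_abs_le1 P (Gf z) (vsub w z) (coord_diff_le1 P K w z Hs Kw Kz)).
    pose proof (vdot_abs_le1 P (g z) (vsub w z) (coord_diff_le1 P K w z Hs Kw Kz)).
    apply Rabs_le_inv in H1. apply Rabs_le_inv in H2. unfold F, Cz. lra. }
  destruct (completeness (fun r => exists w, K w /\ r = - F w)) as [m' [Hub Hlub]].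
  { exists (- (F z - Cz)). intros r [w [Kw ->]]. specialize (Hlow w Kw). lra. }
  { exists (- F z); exists z; auto. }
  set (m := - m').
  assert (Hm1 : forall w, K w -> m <= F w).
  { intros w Kw. assert (- F w <= m') by (apply Hub; exists w; auto). unfold m; lra. }
  assert (Hm2 : forall eps, 0 < eps -> exists w, K w /\ F w < m + eps).
  { intros eps He. apply NNPP; intros Hn.
    assert (m' <= m' - eps).
    { apply Hlub. intros r [w [Kw ->]]. destruct (Rlt_dec (F w) (m + eps)) as [Hl|Hl].
      - exfalso; apply Hn; exists w; auto.
      - unfold m in Hl; lra. }
    lra. }
  set (u := fun k : nat => epsilon (inhabits (fun _ : path => 0)) (fun w => K w /\ F w < m + / (INR k + 1))).
  assert (Hu : forall k, K (u k) /\ F (u k) < m + / (INR k + 1)).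
  { intros k. unfold u. apply epsilon_spec. apply Hm2. apply Rinv_0_lt_compat. pose proof (pos_INR k); lra. }
  destruct (bwP P u) as [phi [x0 [Hphi Hx0]]].
  { intros k p Hp. apply (simplex_coord P); auto. apply Hs, Hu. }
  set (xs := fun p => if in_dec path_eq_dec p P then x0 p else 0).
  assert (Hxs : forall p, In p P -> Un_cv (fun k => u (phi k) p) (xs p)).
  { intros p Hp. unfold xs. destruct (in_dec path_eq_dec p P); [auto|contradiction]. }
  assert (Happrox : forall eps eta, 0 < eps -> 0 < eta -> exists w, K w /\ F w < m + eps /\ vnorm P (vsub w xs) < eta).
  { intros eps eta He Het.
    destruct (cv_vnorm P (fun k => u (phi k)) xs Hxs eta Het) as [N1 HN1].
    destruct (small_inv eps He) as [N2 HN2].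
    set (k := max N1 N2). exists (u (phi k)). split; [apply Hu|]. split; [|apply HN1; lia].
    destruct (Hu (phi k)) as [_ Hf]. eapply Rlt_le_trans; [exact Hf|].
    apply Rplus_le_compat_l. apply Rlt_le. apply HN2. pose proof (sincr_ge phi Hphi k). lia. }
  assert (Kxs : K xs).
  { apply Hcl.
    - intros p Hp. unfold xs. destruct (in_dec path_eq_dec p P); [contradiction|auto].
    - intros eps He. destruct (Happrox 1 eps ltac:(lra) He) as [w [Kw [_ Hw]]]. exists w; auto. }
  assert (Hxsh : hyper P xs) by (apply simplex_hyper; auto).
  destruct (classic (rel_int P K xs)) as [Hint|Hnint].
  -
    exists xs. split; auto. intros w Kw. apply Rle_trans with m; [|apply Hm1; auto]. fold (F xs).
    set (C := lsum P (fun p => Rabs (Gf xs p)) + lsum P (fun p => Rabs (g xs p))).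
    assert (HC : 0 <= C) by (unfold C; assert (H1 := lsum_nonneg P (fun p => Rabs (Gf xs p))); assert (H2 := lsum_nonneg P (fun p => Rabs (g xs p))); 
      assert (0 <= lsum P (fun p => Rabs (Gf xs p))) by (apply H1; intros; apply Rabs_pos);
      assert (0 <= lsum P (fun p => Rabs (g xs p))) by (apply H2; intros; apply Rabs_pos); lra).
    apply Rge_le. apply (eps_arg _ _ 2); [lra|]. intros eps He.
    destruct (Happrox eps (eps / (C + 1)) He ltac:(apply Rdiv_lt_0_compat; lra)) as [y [Ky [Hy1 Hy2]]].
    assert (Hyh : hyper P y) by (apply simplex_hyper; auto).
    pose proof (grad_ineq P K f xs (Gf xs) y Hc Hfc Kxs Ky Hxsh Hyh (Hgf xs Hint)).
    pose proof (grad_ineq P K h xs (g xs) y Hc Hhc Kxs Ky Hxsh Hyh (Hg xs Hint)).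
    pose proof (vdot_abs_le P (Gf xs) (vsub y xs)). pose proof (vdot_abs_le P (g xs) (vsub y xs)).
    apply Rabs_le_inv in H1. apply Rabs_le_inv in H2.
    assert (C * vnorm P (vsub y xs) <= eps).
    { assert (Hn := vnorm_ge0 P (vsub y xs)).
      apply Rle_trans with (C * (eps / (C+1))); [apply Rmult_le_compat_l; lra|].
      apply (Rmult_le_reg_l (C+1)); [lra|]. field_simplify; [|lra]. nra. }
    unfold F in Hy1 |- *. unfold C in H3. lra.
  -
    exfalso.
    assert (Hbd : rel_boundary P K xs).
    { split; auto. split; auto. intros eps He. exists xs. split; auto.
      rewrite (vnorm_ext P _ (fun _ => 0)) by (intros; unfold vsub; ring).
      unfold vnorm. rewrite (lsum_ext P _ (fun _ => 0)) by (intros; ring). rewrite lsum_zero, sqrt_0. auto. }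
    assert (Hzint : rel_int P K z) by exact Hz.
    destruct Hz as [_ [e0 [He0 Hz0]]].
    destruct (Hg z (conj Kz (ex_intro _ e0 (conj He0 Hz0))) 1 ltac:(lra)) as [d1 [Hd1 Hgz]].
    set (r := Rmin d1 e0 / 2).
    assert (Hr : 0 < r) by (unfold r; apply Rdiv_lt_0_compat; [apply Rmin_glb_lt; auto|lra]).
    assert (Hr1 : r < d1) by (unfold r; pose proof (Rmin_l d1 e0); pose proof (Rmin_glb_lt d1 e0 0 Hd1 He0); lra).
    assert (Hr2 : r < e0) by (unfold r; pose proof (Rmin_r d1 e0); pose proof (Rmin_glb_lt d1 e0 0 Hd1 He0); lra).
    set (Sgz := lsum P (fun p => Rabs (g z p))).
    assert (HSgz : 0 <= Sgz) by (apply lsum_nonneg; intros; apply Rabs_pos).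
    set (Mh := h z + r * (Sgz + 1)).
    assert (HMh : forall v, tangent P v -> vnorm P v = 1 -> K (vadd z (vscale r v)) /\ h (vadd z (vscale r v)) <= Mh).
    { intros v Hv Hv1.
      assert (Hn : vnorm P (vscale r v) = r) by (rewrite vnorm_scale, Hv1, Rabs_pos_eq; lra).
      assert (Kw : K (vadd z (vscale r v))).
      { apply Hz0. apply hyper_vadd; auto; apply tangent_scale; auto.
        replace (vsub (vadd z (vscale r v)) z) with (vscale r v)
          by (apply functional_extensionality; intros p; unfold vsub, vadd; ring). lra. }
      split; auto.
      specialize (Hgz (vscale r v) (tangent_scale P r v Hv) ltac:(lra) Kw).
      pose proof (vdot_abs_le P (g z) (vscale r v)). rewrite Hn in H, Hgz.
      apply Rabs_le_inv in H. apply Rabs_le_inv in Hgz. unfold Mh, Sgz in *. nra. }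
    set (Lh := h z - Sgz).
    assert (HLh : forall w, K w -> Lh <= h w).
    { intros w Kw. assert (Hwh : hyper P w) by (apply simplex_hyper; auto).
      pose proof (grad_ineq P K h z (g z) w Hc Hhc Kz Kw Hzh Hwh (Hg z (conj Kz (ex_intro _ e0 (conj He0 Hz0))))).
      pose proof (vdot_abs_le1 P (g z) (vsub w z) (coord_diff_le1 P K w z Hs Kw Kz)).
      apply Rabs_le_inv in H0. unfold Lh, Sgz. lra. }
    set (D := Mh - Lh).
    destruct (Hloc xs Kxs) as [B [dB [HdB HB]]].
    assert (HB0 : 0 <= B).
    { assert (Hex : exists p0, In p0 P) by (destruct P as [|p0 l]; [congruence| exists p0; simpl; auto]).
      destruct Hex as [p0 Hp0].
      assert (Hyint : rel_int P K (comb (Rmin 1 (dB / (2 * (vnorm P (vsub z xs) + 1)))) z xs)).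
      { apply seg_int; auto. split. apply Rmin_glb_lt; [lra|]. apply Rdiv_lt_0_compat; auto.
        pose proof (vnorm_ge0 P (vsub z xs)); lra. apply Rmin_l. }
      set (tt := Rmin 1 (dB / (2 * (vnorm P (vsub z xs) + 1)))) in *.
      assert (Htt : 0 < tt) by (unfold tt; apply Rmin_glb_lt; [lra|]; apply Rdiv_lt_0_compat; auto; pose proof (vnorm_ge0 P (vsub z xs)); lra).
      assert (0 <= Rabs (Gf (comb tt z xs) p0)) by apply Rabs_pos.
      assert (Rabs (Gf (comb tt z xs) p0) <= B); [|lra].
      apply HB; [auto| |auto].
      rewrite vsub_comb, vnorm_scale, Rabs_pos_eq by lra.
      set (nz := vnorm P (vsub z xs)). assert (0 <= nz) by apply vnorm_ge0.
      assert (tt <= dB / (2 * (nz + 1))) by apply Rmin_r.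
      apply Rle_lt_trans with (dB / (2 * (nz + 1)) * nz); [apply Rmult_le_compat_r; lra|].
      apply (Rmult_lt_reg_l (2 * (nz + 1))); [lra|]. field_simplify; nra. }
    set (A := B * INR (length P)).
    assert (HA : 0 <= A) by (unfold A; apply Rmult_le_pos; auto; apply pos_INR).
    set (Mbig := (Rabs D + A + 1) / r).
    destruct (Hblow xs Hbd Mbig) as [del [Hdel Hdelp]].
    set (nz := vnorm P (vsub z xs)). assert (Hnz : 0 <= nz) by apply vnorm_ge0.
    set (dd := Rmin del dB).
    assert (Hdd : 0 < dd) by (apply Rmin_glb_lt; auto).
    set (t := Rmin (1/2) (dd / (2 * (nz + 1)))).
    assert (Ht : 0 < t) by (unfold t; apply Rmin_glb_lt; [lra| apply Rdiv_lt_0_compat; lra]).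
    assert (Ht1 : t <= 1/2) by apply Rmin_l.
    assert (Ht2 : t <= dd / (2 * (nz + 1))) by apply Rmin_r.
    set (y := comb t z xs).
    assert (Hyint : rel_int P K y) by (apply seg_int; auto; lra).
    assert (Ky : K y) by apply Hyint.
    assert (Hyh : hyper P y) by (apply simplex_hyper; auto).
    assert (Hyd : vnorm P (vsub y xs) < dd).
    { unfold y. rewrite vsub_comb, vnorm_scale, Rabs_pos_eq by lra. fold nz.
      apply Rle_lt_trans with (dd / (2 * (nz + 1)) * nz); [apply Rmult_le_compat_r; lra|].
      apply (Rmult_lt_reg_l (2 * (nz + 1))); [lra|]. field_simplify; nra. }
    assert (HNy : Mbig < vnorm P (Phi P (g y))).
    { apply Hdelp; auto. pose proof (Rmin_l del dB). fold dd in H. lra. }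
    assert (HGfy : forall p, In p P -> Rabs (Gf y p) <= B).
    { apply HB; auto. pose proof (Rmin_r del dB). fold dd in H. lra. }
    set (Ny := vnorm P (Phi P (g y))) in *.
    assert (HMbig : r * Mbig = Rabs D + A + 1) by (unfold Mbig; field; lra).
    assert (HrN : r * Ny > Rabs D + A + 1) by (rewrite <- HMbig; apply Rmult_lt_compat_l; auto).
    destruct (dir_lemma P (g y) HP) as [uu [Huu1 [Huu2 Huu3]]].
    { assert (0 < Mbig) by (unfold Mbig; apply Rdiv_lt_0_compat; auto; pose proof (Rabs_pos D); lra). fold Ny; lra. }
    fold Ny in Huu3.
    destruct (HMh uu Huu1 Huu2) as [Kw0 Hw0].
    set (w0 := vadd z (vscale r uu)) in *.
    pose proof (grad_ineq P K h y (g y) w0 Hc Hhc Ky Kw0 Hyh (simplex_hyper _ _ (Hs _ Kw0)) (Hg y Hyint)) as Gw0.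
    assert (E1 : vdot P (g y) (vsub w0 y) = (1 - t) * vdot P (g y) (vsub z xs) + r * Ny).
    { rewrite <- Huu3. unfold vdot, w0, y, vsub, vadd, vscale, comb. rewrite <- lsum_scal, <- lsum_scal, <- lsum_plus.
      apply lsum_ext; intros; ring. }
    pose proof (HLh y Ky).
    set (s := vdot P (g y) (vsub z xs)) in *.
    assert (Hs1 : (1 - t) * s <= D - r * Ny) by (unfold D; lra).
    assert (Hs2 : s <= D - r * Ny).
    { assert (D - r * Ny < 0) by (pose proof (Rle_abs D); lra).
      destruct (Rle_dec s 0); [|nra]. nra. }
    set (sf := vdot P (Gf y) (vsub z xs)).
    assert (Hsf : Rabs sf <= A).
    { unfold sf. eapply Rle_trans; [apply vdot_abs_le1; apply (coord_diff_le1 P K); auto|].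
      unfold A. rewrite Rmult_comm, <- lsum_const. apply lsum_le; auto. }
    apply Rabs_le_inv in Hsf.
    set (Cy := lsum P (fun p => Rabs (Gf y p)) + lsum P (fun p => Rabs (g y p))).
    assert (HCy : 0 <= Cy).
    { unfold Cy. assert (0 <= lsum P (fun p => Rabs (Gf y p))) by (apply lsum_nonneg; intros; apply Rabs_pos).
      assert (0 <= lsum P (fun p => Rabs (g y p))) by (apply lsum_nonneg; intros; apply Rabs_pos). lra. }
    destruct (Happrox (t/2) (t / 2 / (Cy + 1)) ltac:(lra) ltac:(apply Rdiv_lt_0_compat; lra)) as [w [Kw [Hw1 Hw2]]].
    assert (Hwh : hyper P w) by (apply simplex_hyper; auto).
    pose proof (grad_ineq P K f y (Gf y) w Hc Hfc Ky Kw Hyh Hwh (Hgf y Hyint)) as Gf1.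
    pose proof (grad_ineq P K h y (g y) w Hc Hhc Ky Kw Hyh Hwh (Hg y Hyint)) as Gh1.
    assert (Ed : forall G, vdot P G (vsub w y) = vdot P G (vsub w xs) - t * vdot P G (vsub z xs)).
    { intros G. unfold vdot, vsub, y, comb. rewrite <- lsum_scal, <- lsum_minus. apply lsum_ext; intros; ring. }
    rewrite Ed in Gf1, Gh1. fold sf in Gf1. fold s in Gh1.
    pose proof (vdot_abs_le P (Gf y) (vsub w xs)). pose proof (vdot_abs_le P (g y) (vsub w xs)).
    apply Rabs_le_inv in H0. apply Rabs_le_inv in H1.
    assert (Cy * vnorm P (vsub w xs) <= t/2 * (Cy / (Cy + 1))).
    { assert (Hn := vnorm_ge0 P (vsub w xs)).
      apply Rle_trans with (Cy * (t / 2 / (Cy + 1))); [apply Rmult_le_compat_l; lra|].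
      right; field; lra. }
    assert (t/2 * (Cy / (Cy + 1)) < t / 2).
    { apply (Rmult_lt_reg_l (2 * (Cy + 1) / t)). apply Rdiv_lt_0_compat; lra.
      field_simplify; lra. }
    pose proof (Hm1 y Ky).
    assert (- t * s >= t * (r * Ny - D)) by nra.
    assert (t * sf <= t * A) by nra.
    assert (t * (r * Ny - D) - t * A >= t) by (pose proof (Rle_abs D) as HD; assert (0 <= t * (r * Ny - D - A - 1)) by (apply Rmult_le_pos; lra); nra).
    assert (X : - (Cy * vnorm P (vsub w xs)) <= vdot P (Gf y) (vsub w xs) + vdot P (g y) (vsub w xs)).
    { unfold Cy. rewrite Rmult_plus_distr_r. lra. }
    unfold F in Hw1, H4. lra.
Qed.


Lemma cont_pt_intro f x : (forall eps, 0 < eps -> exists del, 0 < del /\ forall y, Rabs (y - x) < del -> Rabs (f y - f x) < eps) -> continuity_pt f x.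
Proof. intros H. unfold continuity_pt, continue_in, limit1_in, limit_in. intros eps He.
  destruct (H eps He) as [d [Hd H']]. exists d; split; auto. intros y [_ Hy]. simpl in *. unfold Rdist in *. auto. Qed.

Lemma cont_pt_elim f x : continuity_pt f x -> forall eps, 0 < eps -> exists del, 0 < del /\ forall y, Rabs (y - x) < del -> Rabs (f y - f x) < eps.
Proof. unfold continuity_pt, continue_in, limit1_in, limit_in. intros H eps He.
  destruct (H eps He) as [d [Hd H']]. exists d; split; auto. intros y Hy.
  destruct (Req_dec y x) as [->|Hne]. { replace (f x - f x) with 0 by ring. rewrite Rabs_R0; auto. }
  apply (H' y). split; [split; [exact I| intro Hxy; apply Hne; symmetry; exact Hxy]|]. simpl; unfold Rdist; auto. Qed.

Definition dom (m : R -> R) (f : R) : Prop := 0 <= f /\ below_cap m f.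

Section Edge.
Variables m m' : R -> R.
Hypothesis Hfd : flow_density m m'.

Lemma m0 : m 0 = 0. Proof. apply Hfd. Qed.
Lemma m_lt x y : 0 <= x -> x < y -> m x < m y. Proof. apply Hfd. Qed.
Lemma m_le x y : 0 <= x -> x <= y -> m x <= m y.
Proof. intros Hx Hxy. destruct (Req_dec x y) as [->|]; [lra|]. apply Rlt_le, m_lt; lra. Qed.
Lemma m_pos r : 0 < r -> 0 < m r.
Proof. intros Hr. rewrite <- m0. apply m_lt; lra. Qed.

Lemma m_right : forall eps, 0 < eps -> exists del, 0 < del /\
      forall y, 0 < y < del -> Rabs (m y / y - m' 0) < eps.
Proof. intros eps He. destruct Hfd as [_ [_ [_ [_ [_ [H _]]]]]].
  destruct (H eps He) as [d [Hd Hd']]. exists d; split; auto. intros y Hy.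
  specialize (Hd' y Hy). rewrite m0 in Hd'. replace (m y - 0) with (m y) in Hd' by ring. auto. Qed.

Lemma m_cont x : 0 <= x -> forall eps, 0 < eps -> exists del, 0 < del /\
    forall y, 0 <= y -> Rabs (y - x) < del -> Rabs (m y - m x) < eps.
Proof. intros Hx eps He. destruct (Req_dec x 0) as [->|Hx0].
  - destruct (m_right 1 ltac:(lra)) as [d [Hd Hd']].
    set (c := Rabs (m' 0) + 1). assert (Hc : 0 < c) by (unfold c; pose proof (Rabs_pos (m' 0)); lra).
    exists (Rmin d (eps / c)). split; [apply Rmin_glb_lt; auto; apply Rdiv_lt_0_compat; auto|].
    intros y Hy Hyd. rewrite m0. replace (y - 0) with y in Hyd by ring. rewrite Rabs_pos_eq in Hyd by lra.
    destruct (Req_dec y 0) as [->|Hy0]. { rewrite m0. replace (0 - 0) with 0 by ring. rewrite Rabs_R0; auto. }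
    assert (Hyd1 : y < d) by (pose proof (Rmin_l d (eps/c)); lra).
    assert (Hyd2 : y < eps / c) by (pose proof (Rmin_r d (eps/c)); lra).
    specialize (Hd' y ltac:(lra)). apply Rabs_lt_inv in Hd'.
    pose proof (Rle_abs (m' 0)). pose proof (Rle_abs (- m' 0)). rewrite Rabs_Ropp in H0.
    assert (Hq : m y = y * (m y / y)) by (field; lra).
    replace (m y - 0) with (m y) by ring. rewrite Hq, Rabs_mult, Rabs_pos_eq by lra.
    apply Rle_lt_trans with (y * c).
    + apply Rmult_le_compat_l; [lra|]. unfold c. apply Rabs_le. lra.
    + apply (Rmult_lt_reg_r (/ c)); [apply Rinv_0_lt_compat; auto|]. rewrite Rmult_assoc, Rinv_r by lra.
      unfold Rdiv in Hyd2. lra.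
  - assert (Hxp : 0 < x) by lra.
    destruct Hfd as [_ [_ [_ [_ [Hd _]]]]].
    assert (Hc : continuity_pt m x) by (apply derivable_continuous_pt; exists (m' x); apply Hd; auto).
    destruct (cont_pt_elim m x Hc eps He) as [d [Hd0 Hd1]]. exists d; split; auto.
Qed.

Lemma ratio_decr r1 r2 : 0 < r1 -> r1 < r2 -> m r2 / r2 < m r1 / r1.
Proof. intros H1 H2. destruct Hfd as [_ [_ [_ [Hc _]]]].
  specialize (Hc r2 0 (r1 / r2) ltac:(lra) ltac:(lra) ltac:(lra)).
  assert (0 < r1 / r2 < 1) by (split; [apply Rdiv_lt_0_compat; lra| apply (Rmult_lt_reg_r r2); [lra|]; field_simplify; lra]).
  specialize (Hc H). rewrite m0 in Hc.
  replace (r1 / r2 * r2 + (1 - r1 / r2) * 0) with r1 in Hc by (field; lra).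
  apply (Rmult_lt_reg_r r1); [lra|].
  replace (m r1 / r1 * r1) with (m r1) by (field; lra).
  replace (m r2 / r2 * r1) with (r1 / r2 * m r2) by (field; lra). lra. Qed.

Lemma mp0_ge r : 0 < r -> m r / r <= m' 0.
Proof. intros Hr. destruct (Rle_dec (m r / r) (m' 0)) as [|Hn]; auto. exfalso.
  destruct (m_right (m r / r - m' 0) ltac:(lra)) as [d [Hd Hd']].
  set (y := Rmin (d/2) (r/2)).
  assert (Hy : 0 < y < d) by (unfold y; split; [apply Rmin_glb_lt; lra|]; pose proof (Rmin_l (d/2) (r/2)); lra).
  assert (Hyr : y < r) by (unfold y; pose proof (Rmin_r (d/2) (r/2)); lra).
  specialize (Hd' y Hy). apply Rabs_lt_inv in Hd'.
  pose proof (ratio_decr y r ltac:(lra) Hyr). lra. Qed.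

Lemma mp0_pos : 0 < m' 0.
Proof. pose proof (mp0_ge 1 ltac:(lra)). pose proof (m_pos 1 ltac:(lra)).
  assert (0 < m 1 / 1) by (apply Rdiv_lt_0_compat; lra). lra. Qed.

Lemma m_inj r1 r2 : 0 <= r1 -> 0 <= r2 -> m r1 = m r2 -> r1 = r2.
Proof. intros H1 H2 He. destruct (Rtotal_order r1 r2) as [H|[H|H]]; auto.
  - pose proof (m_lt r1 r2 H1 H); lra.
  - pose proof (m_lt r2 r1 H2 H); lra. Qed.

Lemma m_exists f : dom m f -> exists r, 0 <= r /\ m r = f.
Proof. intros [Hf [r1 [Hr1 Hlt]]].
  destruct (Req_dec f 0) as [->|Hf0]. { exists 0; split; [lra| apply m0]. }
  assert (Hr1p : 0 < r1). { destruct (Req_dec r1 0) as [->|]; [rewrite m0 in Hlt; lra| lra]. }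
  set (G := fun x => m (Rmax 0 x) - f).
  destruct (Ranalysis5.IVT_interv G 0 r1) as [z [Hz HGz]].
  - intros a Ha. apply cont_pt_intro. intros eps He.
    destruct (m_cont (Rmax 0 a) (Rmax_l 0 a) eps He) as [d [Hd Hd']].
    exists d; split; auto. intros y Hy. unfold G.
    replace (m (Rmax 0 y) - f - (m (Rmax 0 a) - f)) with (m (Rmax 0 y) - m (Rmax 0 a)) by ring.
    apply Hd'; [apply Rmax_l|]. 
    apply Rle_lt_trans with (Rabs (y - a)); auto.
    unfold Rmax; destruct (Rle_dec 0 y), (Rle_dec 0 a); apply Rabs_le; unfold Rabs; destruct (Rcase_abs (y - a)); lra.
  - auto.
  - unfold G. rewrite Rmax_left by lra. rewrite m0; lra.
  - unfold G. rewrite Rmax_right by lra. lra.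
  - exists z. split; [lra|]. unfold G in HGz. rewrite Rmax_right in HGz by lra. lra.
Qed.

Lemma muinv_spec f : dom m f -> 0 <= muinv m f /\ m (muinv m f) = f.
Proof. intros Hd. unfold muinv. apply (epsilon_spec (inhabits 0) (fun r => 0 <= r /\ m r = f)). apply m_exists; auto. Qed.

Lemma muinv_eq f r : dom m f -> 0 <= r -> m r = f -> muinv m f = r.
Proof. intros Hd Hr Hm. destruct (muinv_spec f Hd). apply m_inj; auto; congruence. Qed.

Lemma dom_down f f' : dom m f -> 0 <= f' <= f -> dom m f'.
Proof. intros [_ [r [Hr Hl]]] H. split; [lra|]. exists r; split; auto; lra. Qed.

Lemma dom_0 : dom m 0.
Proof. split; [lra|]. exists 1. split; [lra|]. apply m_pos; lra. Qed.

Lemma muinv_mono a b : dom m a -> dom m b -> a <= b -> muinv m a <= muinv m b.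
Proof. intros Ha Hb Hab. destruct (muinv_spec a Ha) as [Ha1 Ha2]. destruct (muinv_spec b Hb) as [Hb1 Hb2].
  destruct (Rle_dec (muinv m a) (muinv m b)) as [|Hn]; auto.
  pose proof (m_lt (muinv m b) (muinv m a) Hb1 ltac:(lra)). lra. Qed.

Lemma muinv_cont c : dom m c -> forall eps, 0 < eps -> exists del, 0 < del /\
   forall f, dom m f -> Rabs (f - c) < del -> Rabs (muinv m f - muinv m c) < eps.
Proof. intros Hc eps He. destruct (muinv_spec c Hc) as [Hr0 Hmr0]. set (r0 := muinv m c) in *.
  set (hi := m (r0 + eps/2)).
  assert (Hhi : c < hi) by (unfold hi; rewrite <- Hmr0; apply m_lt; lra).
  destruct (Rlt_dec 0 (r0 - eps/2)) as [Hlo|Hlo].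
  - set (lo := m (r0 - eps/2)).
    assert (Hlo' : lo < c) by (unfold lo; rewrite <- Hmr0; apply m_lt; lra).
    exists (Rmin (hi - c) (c - lo)). split; [apply Rmin_glb_lt; lra|].
    intros f Hf Hfc. pose proof (Rmin_l (hi - c) (c - lo)). pose proof (Rmin_r (hi - c) (c - lo)).
    apply Rabs_lt_inv in Hfc. destruct (muinv_spec f Hf) as [Hr Hmr].
    assert (muinv m f < r0 + eps/2).
    { destruct (Rlt_dec (muinv m f) (r0 + eps/2)) as [|Hn]; auto.
      pose proof (m_le (r0 + eps/2) (muinv m f) ltac:(lra) ltac:(lra)). fold hi in H1. lra. }
    assert (r0 - eps/2 < muinv m f).
    { destruct (Rlt_dec (r0 - eps/2) (muinv m f)) as [|Hn]; auto.
      pose proof (m_le (muinv m f) (r0 - eps/2) Hr ltac:(lra)). fold lo in H2. lra. }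
    apply Rabs_def1; lra.
  - exists (hi - c). split; [lra|]. intros f Hf Hfc. apply Rabs_lt_inv in Hfc.
    destruct (muinv_spec f Hf) as [Hr Hmr].
    assert (muinv m f < r0 + eps/2).
    { destruct (Rlt_dec (muinv m f) (r0 + eps/2)) as [|Hn]; auto.
      pose proof (m_le (r0 + eps/2) (muinv m f) ltac:(lra) ltac:(lra)). fold hi in H. lra. }
    apply Rabs_def1; lra.
Qed.

Definition Q (r : R) : R := if Req_EM_T r 0 then / m' 0 else r / m r.

Lemma T_Q f : dom m f -> delay m m' f = Q (muinv m f).
Proof. intros Hd. unfold delay, Q. destruct (muinv_spec f Hd) as [H1 H2].
  destruct (Req_EM_T f 0) as [->|Hf].
  - rewrite (muinv_eq 0 0 Hd ltac:(lra) m0). destruct (Req_EM_T 0 0); [auto|congruence].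
  - destruct (Req_EM_T (muinv m f) 0) as [He|He].
    + rewrite He, m0 in H2. congruence.
    + rewrite H2. auto. Qed.

Lemma Q_pos r : 0 <= r -> 0 < Q r.
Proof. intros Hr. unfold Q. destruct (Req_EM_T r 0). apply Rinv_0_lt_compat, mp0_pos.
  apply Rdiv_lt_0_compat; [lra| apply m_pos; lra]. Qed.

Lemma Q_mono r1 r2 : 0 <= r1 <= r2 -> Q r1 <= Q r2.
Proof. intros H. unfold Q. destruct (Req_EM_T r1 0) as [->|H1]; destruct (Req_EM_T r2 0) as [->|H2].
  - lra.
  - pose proof (mp0_ge r2 ltac:(lra)). pose proof (m_pos r2 ltac:(lra)). pose proof mp0_pos.
    assert (m r2 <= m' 0 * r2) by (apply (Rmult_le_reg_r (/ r2)); [apply Rinv_0_lt_compat; lra|];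
       replace (m' 0 * r2 * / r2) with (m' 0) by (field; lra); exact H0).
    apply (Rmult_le_reg_r (m' 0 * m r2)); [nra|]. field_simplify; lra.
  - lra.
  - destruct (Req_dec r1 r2) as [->|H3]; [lra|].
    pose proof (ratio_decr r1 r2 ltac:(lra) ltac:(lra)). pose proof (m_pos r2 ltac:(lra)). pose proof (m_pos r1 ltac:(lra)).
    assert (m r2 * r1 < m r1 * r2).
    { apply (Rmult_lt_reg_r (/ (r1 * r2))). apply Rinv_0_lt_compat; nra.
      replace (m r2 * r1 * / (r1 * r2)) with (m r2 / r2) by (field; lra).
      replace (m r1 * r2 * / (r1 * r2)) with (m r1 / r1) by (field; lra). lra. }
    apply (Rmult_le_reg_r (m r1 * m r2)); [nra|]. field_simplify; lra.
Qed.

Lemma Q_cont r0 : 0 <= r0 -> forall eps, 0 < eps -> exists del, 0 < del /\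
   forall r, 0 <= r -> Rabs (r - r0) < del -> Rabs (Q r - Q r0) < eps.
Proof. intros Hr0 eps He. destruct (Req_dec r0 0) as [->|Hne].
  - pose proof mp0_pos as Hp. set (a := m' 0) in *.
    destruct (m_right (Rmin (a/2) (eps * a * a / 4))) as [d [Hd Hd']].
    { apply Rmin_glb_lt; [lra|]. assert (0 < a*a) by nra. apply Rdiv_lt_0_compat; nra. }
    exists d; split; auto. intros r Hr Hrd. replace (r - 0) with r in Hrd by ring.
    rewrite Rabs_pos_eq in Hrd by auto.
    unfold Q. destruct (Req_EM_T 0 0) as [_|]; [|congruence].
    destruct (Req_EM_T r 0) as [->|Hr0']. { replace (/ m' 0 - / m' 0) with 0 by ring. rewrite Rabs_R0; auto. }
    assert (Hrp : 0 < r) by (destruct (Rle_lt_or_eq_dec 0 r Hr); [auto| congruence]).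
    specialize (Hd' r ltac:(lra)). fold a in Hd'.
    pose proof (Rmin_l (a/2) (eps * a * a / 4)). pose proof (Rmin_r (a/2) (eps * a * a / 4)).
    apply Rabs_lt_inv in Hd'. set (s := m r / r) in *.
    assert (Hs : 0 < s) by (unfold s; apply Rdiv_lt_0_compat; [apply m_pos|]; lra).
    assert (Hmr : 0 < m r) by (apply m_pos; lra).
    replace (r / m r) with (/ s) by (unfold s; field; split; apply Rgt_not_eq; lra).
    change (m' 0) with a.
    replace (/ s - / a) with ((a - s) / (s * a)) by (field; split; apply Rgt_not_eq; lra).
    unfold Rdiv. rewrite Rabs_mult, Rabs_inv, (Rabs_pos_eq (s * a)) by nra.
    apply (Rmult_lt_reg_r (s * a)); [nra|]. rewrite Rmult_assoc, Rinv_l, Rmult_1_r by nra.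
    apply Rle_lt_trans with (eps * a * a / 4). { apply Rabs_le. lra. }
    unfold Rdiv. assert (a / 2 <= s) by lra. assert (0 < eps * a) by nra. nra.
  - assert (Hp : 0 < r0) by lra.
    assert (Hc : continuity_pt (fun r => r / m r) r0).
    { apply continuity_pt_div. apply derivable_continuous_pt, derivable_pt_id.
      destruct Hfd as [_ [_ [_ [_ [Hd _]]]]]. apply derivable_continuous_pt; exists (m' r0); apply Hd; auto.
      pose proof (m_pos r0 Hp); lra. }
    destruct (cont_pt_elim _ r0 Hc eps He) as [d [Hd Hd']].
    exists (Rmin d r0). split; [apply Rmin_glb_lt; auto|]. intros r Hr Hrd.
    pose proof (Rmin_l d r0). pose proof (Rmin_r d r0).
    unfold Q. destruct (Req_EM_T r 0) as [->|]. { apply Rabs_lt_inv in Hrd. lra. }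
    destruct (Req_EM_T r0 0) as [|]; [lra|]. apply Hd'. lra.
Qed.

Lemma T_cont c : dom m c -> forall eps, 0 < eps -> exists del, 0 < del /\
   forall f, dom m f -> Rabs (f - c) < del -> Rabs (delay m m' f - delay m m' c) < eps.
Proof. intros Hc eps He. destruct (muinv_spec c Hc) as [H1 _].
  destruct (Q_cont (muinv m c) H1 eps He) as [d1 [Hd1 Hd1']].
  destruct (muinv_cont c Hc d1 Hd1) as [d2 [Hd2 Hd2']].
  exists d2; split; auto. intros f Hf Hfc. rewrite !T_Q by auto. apply Hd1'; [apply muinv_spec; auto|]. auto. Qed.

Lemma T_mono a b : dom m a -> dom m b -> a <= b -> delay m m' a <= delay m m' b.
Proof. intros Ha Hb Hab. rewrite !T_Q by auto. apply Q_mono. split; [apply muinv_spec; auto|]. apply muinv_mono; auto. Qed.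

Lemma T_pos a : dom m a -> 0 < delay m m' a.
Proof. intros Ha. rewrite T_Q by auto. apply Q_pos, muinv_spec; auto. Qed.

End Edge.


Lemma clamp_lip a x y : Rabs (Rmax 0 (Rmin y a) - Rmax 0 (Rmin x a)) <= Rabs (y - x).
Proof. unfold Rmax, Rmin. repeat destruct Rle_dec; apply Rabs_le; unfold Rabs; destruct (Rcase_abs (y - x)); lra. Qed.

Section Int.
Variables m m' : R -> R.
Hypothesis Hfd : flow_density m m'.
Let T := delay m m'.



Lemma integ a : dom m a -> Riemann_integrable T 0 a.
Proof. intros Ha. assert (Ha0 : 0 <= a) by apply Ha.
  set (cl := fun x => Rmax 0 (Rmin x a)).
  assert (Hcl : forall x, dom m (cl x)).
  { intros x. apply (dom_down m a); auto. unfold cl, Rmax, Rmin. repeat destruct Rle_dec; lra. }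
  assert (Hi : Riemann_integrable (fun x => T (cl x)) 0 a).
  { apply continuity_implies_RiemannInt; auto. intros x _. apply cont_pt_intro. intros eps He.
    destruct (T_cont m m' Hfd (cl x) (Hcl x) eps He) as [d [Hd Hd']].
    exists d; split; auto. intros y Hy. apply Hd'; auto. eapply Rle_lt_trans; [apply clamp_lip|]. auto. }
  apply (Riemann_integrable_ext (fun x => T x)) in Hi; auto.
  intros x Hx. rewrite Rmin_left, Rmax_right in Hx by auto. unfold cl.
  rewrite Rmin_left, Rmax_right by lra. reflexivity. Qed.

Lemma Rint_eq a (pr : Riemann_integrable T 0 a) : Rint T 0 a = RiemannInt pr.
Proof. unfold Rint. destruct (excluded_middle_informative _) as [H|H].
  - apply RiemannInt_P5.
  - exfalso; apply H; constructor; exact pr. Qed.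

Lemma Psi_bounds a b : 0 <= a <= b -> dom m b ->
  delay m m' a * (b - a) <= Rint T 0 b - Rint T 0 a <= delay m m' b * (b - a).
Proof. intros Hab Hb.
  assert (Ha : dom m a) by (apply (dom_down m b); auto).
  pose proof (integ b Hb) as pr0b. pose proof (integ a Ha) as pr0a.
  pose proof (RiemannInt_P23 pr0b (conj (proj1 Hab) (proj2 Hab))) as prab.
  rewrite (Rint_eq b pr0b), (Rint_eq a pr0a).
  rewrite <- (RiemannInt_P26 pr0a prab pr0b).
  replace (RiemannInt pr0a + RiemannInt prab - RiemannInt pr0a) with (RiemannInt prab) by ring.
  split.
  - rewrite <- (RiemannInt_P15 (RiemannInt_P14 a b (delay m m' a))).
    apply RiemannInt_P19; [lra|]. intros x Hx. unfold fct_cte. apply T_mono; auto.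
    apply (dom_down m b); auto; lra. lra.
  - rewrite <- (RiemannInt_P15 (RiemannInt_P14 a b (delay m m' b))).
    apply RiemannInt_P19; [lra|]. intros x Hx. unfold fct_cte. apply T_mono; auto.
    apply (dom_down m b); auto; lra. lra.
Qed.

Lemma Psi_grad a b : dom m a -> dom m b -> Rint T 0 b - Rint T 0 a >= delay m m' a * (b - a).
Proof. intros Ha Hb. destruct (Rle_dec a b) as [H|H].
  - pose proof (Psi_bounds a b (conj (proj1 Ha) H) Hb). lra.
  - apply Rnot_le_lt in H. pose proof (Psi_bounds b a (conj (proj1 Hb) (Rlt_le _ _ H)) Ha). nra. Qed.

Lemma Psi_deriv a : dom m a -> forall eps, 0 < eps -> exists del, 0 < del /\
  forall b, dom m b -> Rabs (b - a) < del ->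
    Rabs (Rint T 0 b - Rint T 0 a - delay m m' a * (b - a)) <= eps * Rabs (b - a).
Proof. intros Ha eps He. destruct (T_cont m m' Hfd a Ha eps He) as [d [Hd Hd']].
  exists d; split; auto. intros b Hb Hba. specialize (Hd' b Hb Hba). apply Rabs_lt_inv in Hd'.
  destruct (Rle_dec a b) as [H|H].
  - pose proof (Psi_bounds a b (conj (proj1 Ha) H) Hb). rewrite (Rabs_pos_eq (b - a)) by lra.
    apply Rabs_le. split; nra.
  - apply Rnot_le_lt in H. pose proof (Psi_bounds b a (conj (proj1 Hb) (Rlt_le _ _ H)) Ha). rewrite (Rabs_left (b - a)) by lra.
    apply Rabs_le. split; nra.
Qed.

End Int.


Definition cvec (E : list edge) (c : edge -> R) : path -> R :=
  fun p => lsum E (fun e => if in_dec edge_eq_dec e p then c e else 0).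

Lemma lin_cvec E P c w : lsum E (fun e => Aflow P w e * c e) = vdot P (cvec E c) w.
Proof. unfold Aflow, vdot, cvec.
  rewrite (lsum_ext E _ (fun e => lsum P (fun p => (if in_dec edge_eq_dec e p then w p else 0) * c e)))
    by (intros; rewrite lsum_scalr; auto).
  rewrite lsum_swap. apply lsum_ext; intros p _. rewrite <- lsum_scalr. apply lsum_ext; intros e _.
  destruct (in_dec edge_eq_dec e p); ring. Qed.

Lemma Aflow_comb P t x y e : Aflow P (comb t x y) e = t * Aflow P x e + (1 - t) * Aflow P y e.
Proof. unfold Aflow, comb. rewrite <- !lsum_scal, <- lsum_plus. apply lsum_ext; intros.
  destruct (in_dec edge_eq_dec e a); ring. Qed.

Lemma Aflow_vadd P x v e : Aflow P (vadd x v) e = Aflow P x e + Aflow P v e.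
Proof. unfold Aflow, vadd. rewrite <- lsum_plus. apply lsum_ext; intros.
  destruct (in_dec edge_eq_dec e a); ring. Qed.

Lemma Aflow_vsub P x v e : Aflow P (vsub x v) e = Aflow P x e - Aflow P v e.
Proof. unfold Aflow, vsub. rewrite <- lsum_minus. apply lsum_ext; intros.
  destruct (in_dec edge_eq_dec e a); ring. Qed.

Lemma Aflow_abs P v e : Rabs (Aflow P v e) <= INR (length P) * vnorm P v.
Proof. unfold Aflow. eapply Rle_trans; [apply lsum_abs|]. rewrite <- lsum_const.
  apply lsum_le; intros p Hp. destruct (in_dec edge_eq_dec e p).
  - apply vnorm_coord; auto.
  - rewrite Rabs_R0; apply vnorm_ge0. Qed.

Lemma Aflow_nonneg P x e : simplex P x -> 0 <= Aflow P x e.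
Proof. intros [_ [H _]]. unfold Aflow. apply lsum_nonneg; intros p Hp.
  destruct (in_dec edge_eq_dec e p); auto; lra. Qed.

Section Main.
Variables (E : list edge) (P : list path) (mu mu' : edge -> R -> R) (K : (path -> R) -> Prop).
Hypothesis Hfd : forall e, In e E -> flow_density (mu e) (mu' e).
Hypothesis HK : forall x, K x -> PiSet E P mu x.

Let T e := delay (mu e) (mu' e).
Definition lpsi (w : path -> R) : R := lsum E (fun e => Rint (delay (mu e) (mu' e)) 0 (Aflow P w e)).
Definition Gpsi (x : path -> R) : path -> R := cvec E (fun e => delay (mu e) (mu' e) (Aflow P x e)).

Lemma K_simplex x : K x -> simplex P x.
Proof. intros Kx; apply HK; auto. Qed.

Lemma K_dom x e : K x -> In e E -> dom (mu e) (Aflow P x e).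
Proof. intros Kx He. split; [apply Aflow_nonneg, K_simplex; auto|]. apply (HK x Kx); auto. Qed.

Lemma lpsi_convex : convex_set K -> convex_on K lpsi.
Proof. intros Hc x y t Kx Ky Ht. assert (Kc : K (comb t x y)) by (apply Hc; auto).
  unfold lpsi. rewrite <- !lsum_scal, <- lsum_plus. apply lsum_le; intros e He.
  pose proof (Psi_grad _ _ (Hfd e He) _ _ (K_dom _ e Kc He) (K_dom _ e Kx He)) as H1.
  pose proof (Psi_grad _ _ (Hfd e He) _ _ (K_dom _ e Kc He) (K_dom _ e Ky He)) as H2.
  rewrite Aflow_comb in *. set (a := Aflow P x e) in *. set (b := Aflow P y e) in *.
  set (Tc := delay (mu e) (mu' e) (t * a + (1 - t) * b)) in *.
  set (F := Rint (delay (mu e) (mu' e)) 0) in *.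
  assert (t * (F a - F (t * a + (1 - t) * b)) >= t * (Tc * (a - (t * a + (1 - t) * b)))) by (apply Rle_ge, Rmult_le_compat_l; lra).
  assert ((1-t) * (F b - F (t * a + (1 - t) * b)) >= (1-t) * (Tc * (b - (t * a + (1 - t) * b)))) by (apply Rle_ge, Rmult_le_compat_l; lra).
  assert (t * (Tc * (a - (t * a + (1 - t) * b))) + (1-t) * (Tc * (b - (t * a + (1 - t) * b))) = 0) by ring.
  lra. Qed.

Lemma lpsi_grad x : K x -> has_rel_grad P K lpsi x (Gpsi x).
Proof. intros Kx eps He.
  set (nP := INR (length P)). set (nE := INR (length E)).
  assert (HnP : 0 <= nP) by apply pos_INR. assert (HnE : 0 <= nE) by apply pos_INR.
  set (e' := eps / ((nE + 1) * (nP + 1))).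
  assert (He' : 0 < e') by (unfold e'; apply Rdiv_lt_0_compat; nra).
  destruct (finite_del E (fun e d => forall b, dom (mu e) b -> Rabs (b - Aflow P x e) < d ->
      Rabs (Rint (delay (mu e) (mu' e)) 0 b - Rint (delay (mu e) (mu' e)) 0 (Aflow P x e)
            - delay (mu e) (mu' e) (Aflow P x e) * (b - Aflow P x e)) <= e' * Rabs (b - Aflow P x e)))
    as [d0 [Hd0 Hd0']].
  { intros e d d' Hd Hq b Hb Hbd. apply Hq; auto; lra. }
  { intros e He0. apply Psi_deriv; auto. apply K_dom; auto. }
  exists (d0 / (nP + 1)). split; [apply Rdiv_lt_0_compat; lra|].
  intros v Hv Hvn Kv.
  assert (Hvn' : nP * vnorm P v < d0).
  { pose proof (vnorm_ge0 P v). apply Rle_lt_trans with ((nP + 1) * vnorm P v); [nra|].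
    apply (Rmult_lt_reg_l (/ (nP + 1))); [apply Rinv_0_lt_compat; lra|].
    rewrite <- Rmult_assoc, Rinv_l, Rmult_1_l by lra. rewrite Rmult_comm. exact Hvn. }
  unfold lpsi, Gpsi. rewrite <- lin_cvec, <- !lsum_minus.
  eapply Rle_trans; [apply lsum_abs|].
  apply Rle_trans with (lsum E (fun _ => e' * (nP * vnorm P v))).
  - apply lsum_le; intros e He0. rewrite Aflow_vadd.
    pose proof (Aflow_abs P v e). fold nP in H.
    specialize (Hd0' e He0 (Aflow P (vadd x v) e) (K_dom _ e Kv He0)).
    rewrite Aflow_vadd in Hd0'.
    replace (Aflow P x e + Aflow P v e - Aflow P x e) with (Aflow P v e) in Hd0' by ring.
    specialize (Hd0' ltac:(lra)).
    eapply Rle_trans; [|apply Rmult_le_compat_l; [lra|exact H]].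
    eapply Rle_trans; [|exact Hd0']. right. f_equal. ring.
  - rewrite lsum_const. fold nE. unfold e'.
    pose proof (vnorm_ge0 P v).
    replace (nE * (eps / ((nE + 1) * (nP + 1)) * (nP * vnorm P v)))
      with (eps * vnorm P v * ((nE * nP) / ((nE + 1) * (nP + 1)))) by (field; lra).
    rewrite <- (Rmult_1_r (eps * vnorm P v)) at 2. apply Rmult_le_compat_l; [nra|].
    apply (Rmult_le_reg_l ((nE + 1) * (nP + 1))); [nra|]. field_simplify; nra.
Qed.

Lemma T_local_bound e x0 : In e E -> K x0 -> exists b del, 0 < del /\ forall y, K y ->
   vnorm P (vsub y x0) < del -> 0 <= delay (mu e) (mu' e) (Aflow P y e) <= b.
Proof. intros He Kx0. pose proof (K_dom x0 e Kx0 He) as [Ha0 [r [Hr Hlt]]].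
  set (a := Aflow P x0 e) in *. set (b := (a + mu e r) / 2).
  assert (Hb : dom (mu e) b) by (split; [unfold b; pose proof (m_pos _ _ (Hfd e He) r); destruct (Req_dec r 0) as [->|]; [rewrite (m0 _ _ (Hfd e He)) in Hlt; lra| ]; lra| exists r; split; auto; unfold b; lra]).
  set (nP := INR (length P)). assert (HnP : 0 <= nP) by apply pos_INR.
  exists (delay (mu e) (mu' e) b), ((b - a) / (nP + 1)). split; [apply Rdiv_lt_0_compat; unfold b; lra|].
  intros y Ky Hy. pose proof (K_dom y e Ky He) as Hdy. split; [apply Rlt_le, T_pos; auto; apply Hfd; auto|].
  apply T_mono; auto. pose proof (Aflow_abs P (vsub y x0) e). rewrite Aflow_vsub in H. fold nP a in H.
  apply Rabs_le_inv in H. pose proof (vnorm_ge0 P (vsub y x0)).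
  assert (nP * vnorm P (vsub y x0) <= b - a).
  { apply Rle_trans with ((nP + 1) * vnorm P (vsub y x0)); [nra|].
    apply (Rmult_le_reg_l (/ (nP + 1))); [apply Rinv_0_lt_compat; lra|].
    rewrite <- Rmult_assoc, Rinv_l, Rmult_1_l by lra. rewrite Rmult_comm. apply Rlt_le. exact Hy. }
  lra. Qed.

Lemma Gpsi_local_bound x0 : K x0 -> exists B del, 0 < del /\ forall y, rel_int P K y ->
   vnorm P (vsub y x0) < del -> forall p, In p P -> Rabs (Gpsi y p) <= B.
Proof. intros Kx0.
  assert (Hgen : forall l, incl l E -> exists B del, 0 < del /\ forall y, K y ->
     vnorm P (vsub y x0) < del -> forall p, Rabs (lsum l (fun e => if in_dec edge_eq_dec e p then delay (mu e) (mu' e) (Aflow P y e) else 0)) <= B).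
  { induction l as [|e l IH]; intros Hincl.
    - exists 0, 1. split; [lra|]. intros. unfold lsum; simpl. rewrite Rabs_R0; lra.
    - destruct IH as [B1 [d1 [Hd1 H1]]]. { intros a Ha; apply Hincl; simpl; auto. }
      destruct (T_local_bound e x0 (Hincl e (or_introl eq_refl)) Kx0) as [b [d2 [Hd2 H2]]].
      exists (b + B1), (Rmin d1 d2). split; [apply Rmin_glb_lt; auto|].
      intros y Ky Hy p. rewrite lsum_cons. eapply Rle_trans; [apply Rabs_triang|].
      assert (H1' := H1 y Ky (Rlt_le_trans _ _ _ Hy (Rmin_l _ _)) p).
      assert (H2' := H2 y Ky (Rlt_le_trans _ _ _ Hy (Rmin_r _ _))).
      destruct (in_dec edge_eq_dec e p).
      + rewrite Rabs_pos_eq by lra. lra.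
      + rewrite Rabs_R0. pose proof (Rabs_pos (lsum l (fun e0 => if in_dec edge_eq_dec e0 p then delay (mu e0) (mu' e0) (Aflow P y e0) else 0))). lra. }
  destruct (Hgen E (incl_refl E)) as [B [d [Hd H]]].
  exists B, d. split; auto. intros y Hy Hyd p _. apply H; auto. apply Hy. Qed.

End Main.


Lemma lin_convex P C K : convex_on K (fun w => vdot P C w).
Proof. intros x y t _ _ _. apply Req_le. unfold vdot, comb.
  rewrite <- !lsum_scal, <- lsum_plus. apply lsum_ext; intros; ring. Qed.

Lemma lin_grad P C K x : has_rel_grad P K (fun w => vdot P C w) x C.
Proof. intros eps He. exists 1. split; [lra|]. intros v _ _ _.
  replace (vdot P C (vadd x v) - vdot P C x - vdot P C v) with 0.
  - rewrite Rabs_R0. apply Rmult_le_pos; [lra| apply vnorm_ge0].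
  - unfold vdot, vadd. rewrite <- !lsum_minus. rewrite <- (lsum_zero P). apply lsum_ext; intros; ring. Qed.

Lemma min_unique K F a b : convex_set K -> strictly_convex_on K F -> is_min K F a -> is_min K F b -> a = b.
Proof. intros Hc Hs [Ka Ha] [Kb Hb]. apply NNPP; intros Hne.
  pose proof (Hs a b (1/2) Ka Kb Hne ltac:(lra)).
  pose proof (Ha (comb (1/2) a b) (Hc a b (1/2) Ka Kb ltac:(lra))).
  pose proof (Ha b Kb). pose proof (Hb a Ka). lra. Qed.

Lemma argmin_eq K F a : convex_set K -> strictly_convex_on K F -> is_min K F a -> argmin K F = a.
Proof. intros Hc Hs Ha. apply (min_unique K F); auto. unfold argmin.
  apply (epsilon_spec (inhabits (fun _ : path => 0)) (fun w => K w /\ forall w', K w' -> F w <= F w')).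
  exists a; exact Ha. Qed.

Theorem mainTheorem12 (n : nat) (E : list edge) (mu mu' : edge -> R -> R)
    (P : list path) (Pih : (path -> R) -> Prop) (h : (path -> R) -> R)
    (g : (path -> R) -> path -> R) :
  network n E ->
  path_enum n E P ->
  (forall e, In e E -> flow_density (mu e) (mu' e)) ->
  mincut_gt1 n E mu ->
  admissible E P mu Pih h g ->
  strictly_convex_on Pih (psi E P mu mu' h) /\
  exists pih : path -> R,
    is_min Pih (psi E P mu mu' h) pih /\
    (forall q, is_min Pih (psi E P mu mu' h) q -> q = pih) /\
    rel_int P Pih pih /\
    Fh E P mu mu' Pih h (Aflow P pih) = pih /\
    (forall pi, rel_int P Pih pi ->
       rel_int P Pih (Fh E P mu mu' Pih h (Aflow P pi)) /\
       0 <= Upsilon E P mu mu' Pih h g pi /\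
       (Upsilon E P mu mu' Pih h g pi = 0 <-> pi = pih)).
Proof.
  intros _ _ Hfd _ Hadm.
  destruct Hadm as [HK [Hcl [Hc [Hint [Hh [Hg [_ Hblow]]]]]]].
  assert (Hs : forall x, Pih x -> simplex P x) by (intros; apply HK; auto).
  assert (Hhyp : forall x, Pih x -> hyper P x) by (intros; apply simplex_hyper; auto).
  assert (Hhc : convex_on Pih h) by (apply strict_convex_on; auto).
  set (cof := fun (x : path -> R) e => delay (mu e) (mu' e) (Aflow P x e)).
  set (F := fun (c : edge -> R) w => vdot P (cvec E c) w + h w).
  assert (Hpsi : psi E P mu mu' h = fun w => lpsi E P mu mu' w + h w) by reflexivity.
  assert (HFh : forall pi, Fh E P mu mu' Pih h (Aflow P pi) = argmin Pih (F (cof pi))).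
  { intros pi. unfold Fh. f_equal. apply functional_extensionality; intros w. unfold F.
    rewrite <- lin_cvec. reflexivity. }
  assert (Hpsic : convex_on Pih (fun w => lpsi E P mu mu' w)) by (apply lpsi_convex; auto).
  assert (Hpsis : strictly_convex_on Pih (psi E P mu mu' h)) by (rewrite Hpsi; apply strict_convex_plus; auto).
  assert (HFs : forall c, strictly_convex_on Pih (F c)) by (intros c; apply strict_convex_plus; auto; apply lin_convex).
  assert (HFc : forall c, convex_on Pih (F c)) by (intros; apply strict_convex_on; auto).
  set (G := fun x => vadd (Gpsi E P mu mu' x) (g x)).
  assert (HGpsi : forall x, rel_int P Pih x -> has_rel_grad P Pih (psi E P mu mu' h) x (G x)).
  { intros x Hx. rewrite Hpsi. apply grad_plus; [apply lpsi_grad; auto; apply Hx| apply Hg; auto]. }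
  assert (HGF : forall x, rel_int P Pih x -> has_rel_grad P Pih (F (cof x)) x (G x)).
  { intros x Hx. unfold F, G. apply grad_plus; [apply lin_grad| apply Hg; auto]. }
  assert (Eq1 : forall x, rel_int P Pih x -> is_min Pih (psi E P mu mu' h) x -> is_min Pih (F (cof x)) x).
  { intros x Hx [Kx Hm]. split; auto. intros w Kw.
    pose proof (foc P Pih _ x (G x) w Hc Kx Kw (Hhyp x Kx) (Hhyp w Kw) (HGpsi x Hx) Hm).
    pose proof (grad_ineq P Pih (F (cof x)) x (G x) w Hc (HFc _) Kx Kw (Hhyp x Kx) (Hhyp w Kw) (HGF x Hx)). lra. }
  assert (Eq2 : forall x, rel_int P Pih x -> is_min Pih (F (cof x)) x -> is_min Pih (psi E P mu mu' h) x).
  { intros x Hx [Kx Hm]. split; auto. intros w Kw.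
    pose proof (foc P Pih _ x (G x) w Hc Kx Kw (Hhyp x Kx) (Hhyp w Kw) (HGF x Hx) Hm).
    pose proof (grad_ineq P Pih (psi E P mu mu' h) x (G x) w Hc (strict_convex_on _ _ Hpsis) Kx Kw (Hhyp x Kx) (Hhyp w Kw) (HGpsi x Hx)). lra. }
  destruct (exists_min P Pih (lpsi E P mu mu') h g (Gpsi E P mu mu') Hs Hcl Hc Hint Hhc
     (fun x Hx => Hg x Hx) Hblow Hpsic (fun x Hx => lpsi_grad E P mu mu' Pih Hfd HK x (proj1 Hx))
     (fun x0 Kx0 => Gpsi_local_bound E P mu mu' Pih Hfd HK x0 Kx0)) as [pih [Hpint Hpmin]].
  assert (Hpm : is_min Pih (psi E P mu mu' h) pih) by (split; [apply Hpint| rewrite Hpsi; auto]).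
  assert (HBR : forall pi, rel_int P Pih pi -> exists w, rel_int P Pih w /\ is_min Pih (F (cof pi)) w /\
             Fh E P mu mu' Pih h (Aflow P pi) = w).
  { intros pi Hpi. set (C := cvec E (cof pi)).
    destruct (exists_min P Pih (fun w => vdot P C w) h g (fun _ => C) Hs Hcl Hc Hint Hhc
       (fun x Hx => Hg x Hx) Hblow (lin_convex P C Pih) (fun x _ => lin_grad P C Pih x)) as [w [Hw Hwm]].
    { intros x0 _. exists (lsum P (fun p => Rabs (C p))), 1. split; [lra|]. intros y _ _ p Hp.
      apply (lsum_term P (fun p => Rabs (C p))); auto. intros; apply Rabs_pos. }
    assert (Hwm' : is_min Pih (F (cof pi)) w) by (split; [apply Hw| exact Hwm]).
    exists w. split; auto. split; auto. rewrite HFh. apply argmin_eq; auto. }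
  assert (Hfix : Fh E P mu mu' Pih h (Aflow P pih) = pih).
  { rewrite HFh. apply argmin_eq; auto. }
  split; [exact Hpsis|]. exists pih. split; [exact Hpm|]. split.
  { intros q Hq. apply (min_unique Pih (psi E P mu mu' h)); auto. }
  split; [exact Hpint|]. split; [exact Hfix|].
  intros pi Hpi. destruct (HBR pi Hpi) as [w [Hw [Hwm HFw]]].
  assert (HU : Upsilon E P mu mu' Pih h g pi = vdot P (vsub (g w) (g pi)) (vsub w pi)).
  { unfold Upsilon. cbv zeta. rewrite HFw.
    assert (Ht : tangent P (vsub w pi)) by (apply tangent_sub; apply Hhyp; [apply Hw| apply Hpi]).
    unfold vdot, vsub at 1 3. 
    rewrite !lsum_ext with (f := fun p => (Phi P (g w) p - Phi P (g pi) p) * vsub w pi p)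
                          (g := fun p => Phi P (g w) p * vsub w pi p - Phi P (g pi) p * vsub w pi p) by (intros; ring).
    rewrite lsum_minus. fold (vdot P (Phi P (g w)) (vsub w pi)). fold (vdot P (Phi P (g pi)) (vsub w pi)).
    rewrite !vdot_Phi by auto. unfold vdot. rewrite <- lsum_minus. apply lsum_ext; intros; ring. }
  assert (Hpos : w <> pi -> vdot P (vsub (g w) (g pi)) (vsub w pi) > 0).
  { intros Hne. apply (strict_mono P Pih h); auto; try apply Hw; try apply Hpi; try apply Hhyp; try apply Hw; try apply Hpi. }
  assert (Hzero : w = pi -> vdot P (vsub (g w) (g pi)) (vsub w pi) = 0).
  { intros ->. unfold vdot, vsub. rewrite <- (lsum_zero P). apply lsum_ext; intros; ring. }
  rewrite HFw. split; [exact Hw|]. rewrite HU. split.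
  - destruct (classic (w = pi)) as [He|Hne]; [rewrite Hzero; auto; lra| apply Rlt_le, Hpos; auto].
  - split.
    + intros H0. destruct (classic (w = pi)) as [He|Hne]; [|pose proof (Hpos Hne); lra].
      rewrite He in Hwm. exact (min_unique _ _ _ _ Hc Hpsis (Eq2 pi Hpi Hwm) Hpm).
    + intros ->. assert (w = pih) by (rewrite <- HFw; exact Hfix). apply Hzero; auto.
Qed.
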